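(* Let $\mathcal L$ be a BQD and let $I\subset T(V\oplus W)$ be the ideal defining its shape algebra, with its $\mathbb N^2$-grading $I=\bigoplus I_{(k,\ell)}$. Then $\dim I_{(3,0)}=\dim I_{(0,3)}=17$ and $\dim I_{(2,1)}=\dim I_{(1,2)}=66$.
   Context: All vector spaces over $\mathbb C$; $TX$ is the tensor algebra; $\alpha\otimes\beta$ is the tensor product of linear maps, $1_X$ the identity; $\mathbb C\otimes X\cong X\cong X\otimes\mathbb C$. A BQD $\mathcal L$ consists of $3$-dimensional vector spaces $V,W$, linear maps $A:V\otimes V\to W$, $a:W\to V\otimes V$, $B:W\otimes W\to V$, $b:V\to W\otimes W$, $C:W\otimes V\to\mathbb C$, $c:\mathbb C\to V\otimes W$, $D:V\otimes W\to\mathbb C$, $d:\mathbb C\to W\otimes V$, and scalars $q,\omega$ with $q\neq0$, $q^2\neq-1$, $\omega^3=1$, such that, with $\kappa=q^{-2}+1+q^2$, $\rho=(q+q^{-1})^{-2}$: $(1_V\otimes C)(c\otimes 1_V)=1_V$; $(D\otimes 1_V)(1_V\otimes d)=1_V$; $Aa=1_W$; $C(A\otimes 1_V)=\omega D(1_V\otimes A)$; $(1_V\otimes a)c=\omega(a\otimes 1_V)d$; $(1_V\otimes D)(a\otimes 1_W)=B$; $\omega^2(1_W\otimes A)(d\otimes 1_V)=b$; $\omega(C\otimes 1_V)(1_W\otimes a)=B$; $(A\otimes 1_W)(1_V\otimes c)=b$; $Dc=\kappa$; $Cd=\kappa$; $(1_V\otimes A)(a\otimes 1_V)(A\otimes 1_V)(1_V\otimes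 a)=\rho(1_{V\otimes W}+cD)$; $(A\otimes 1_V)(1_V\otimes a)(1_V\otimes A)(a\otimes 1_V)=\rho(1_{W\otimes V}+dC)$; and either $q^2=1$ or $q^2$ is not a root of unity. Let $G:=(1_V\otimes A)(a\otimes 1_V):W\otimes V\to V\otimes W$. $I$ is the two-sided ideal of $T(V\oplus W)$ generated by $\operatorname{Im}a$, $\operatorname{Im}b$, $\operatorname{Im}c$ and all $w\otimes v+(q+q^{-1})G(w\otimes v)$ ($v\in V,w\in W$); $T(V\oplus W)$ is $\mathbb N^2$-graded with $V$ in degree $(1,0)$, $W$ in degree $(0,1)$, and $I$ is homogeneous. *)

(* Defs.v *)
From HB Require Import structures.
From mathcomp Require Import all_boot all_algebra.
From mathcomp Require Import reals complex.
Set Implicit Arguments. Unset Strict Implicit. Unset Printing Implicit Defensive.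
Import GRing.Theory.
Local Open Scope ring_scope.

(* Coordinates: V and W are identified with C^3 via chosen bases
   v_0,v_1,v_2 and w_0,w_1,w_2.  A linear map between tensor products of
   copies of V, W and C is recorded by its matrix coefficients:
     tA i j k = coefficient of w_k in A(v_i (x) v_j)
     ta k i j = coefficient of v_i (x) v_j in a(w_k)
     tB k l i = coefficient of v_i in B(w_k (x) w_l)
     tb i k l = coefficient of w_k (x) w_l in b(v_i)
     tC k i   = C(w_k (x) v_i)
     tc i k   = coefficient of v_i (x) w_k in c(1)
     tD i k   = D(v_i (x) w_k)
     td k i   = coefficient of w_k (x) v_i in d(1)                       *)

Definition kron (i j : 'I_3) {R : nzRingType} : R := (i == j)%:R.

Record BQD (R : realType) : Type := MkBQD {
  q : R[i]; om : R[i];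
  tA : 'I_3 -> 'I_3 -> 'I_3 -> R[i];
  ta : 'I_3 -> 'I_3 -> 'I_3 -> R[i];
  tB : 'I_3 -> 'I_3 -> 'I_3 -> R[i];
  tb : 'I_3 -> 'I_3 -> 'I_3 -> R[i];
  tC : 'I_3 -> 'I_3 -> R[i];
  tc : 'I_3 -> 'I_3 -> R[i];
  tD : 'I_3 -> 'I_3 -> R[i];
  td : 'I_3 -> 'I_3 -> R[i];
  q_neq0 : q != 0;
  q2_neqN1 : q ^+ 2 != -1;
  om3 : om ^+ 3 = 1;
  q_root : q ^+ 2 = 1 \/ (forall n : nat, (0 < n)%N -> (q ^+ 2) ^+ n != 1);
  (* (1_V (x) C)(c (x) 1_V) = 1_V *)
  ax1 : forall i j, \sum_(k : 'I_3) tc i k * tC k j = kron i j;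
  (* (D (x) 1_V)(1_V (x) d) = 1_V *)
  ax2 : forall i j, \sum_(k : 'I_3) tD i k * td k j = kron i j;
  (* A a = 1_W *)
  ax3 : forall k k', \sum_(i : 'I_3) \sum_(j : 'I_3) ta k i j * tA i j k' = kron k k';
  (* C (A (x) 1_V) = om D (1_V (x) A) *)
  ax4 : forall i j m, \sum_(k : 'I_3) tA i j k * tC k m
                      = om * \sum_(k : 'I_3) tA j m k * tD i k;
  (* (1_V (x) a) c = om (a (x) 1_V) d *)
  ax5 : forall i j m, \sum_(k : 'I_3) tc i k * ta k j m
                      = om * \sum_(k : 'I_3) td k m * ta k i j;
  (* (1_V (x) D)(a (x) 1_W) = B *)
  ax6 : forall k l i, \sum_(j : 'I_3) ta k i j * tD j l = tB k l i;
  (* om^2 (1_W (x) A)(d (x) 1_V) = b *)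
  ax7 : forall m k l, om ^+ 2 * \sum_(j : 'I_3) td k j * tA j m l = tb m k l;
  (* om (C (x) 1_V)(1_W (x) a) = B *)
  ax8 : forall k l j, om * \sum_(i : 'I_3) ta l i j * tC k i = tB k l j;
  (* (A (x) 1_W)(1_V (x) c) = b *)
  ax9 : forall m l k, \sum_(i : 'I_3) tc i k * tA m i l = tb m l k;
  (* D c = kappa *)
  ax10 : \sum_(i : 'I_3) \sum_(k : 'I_3) tD i k * tc i k = q ^- 2 + 1 + q ^+ 2;
  (* C d = kappa *)
  ax11 : \sum_(k : 'I_3) \sum_(i : 'I_3) tC k i * td k i = q ^- 2 + 1 + q ^+ 2;
  (* (1_V (x) A)(a (x) 1_V)(A (x) 1_V)(1_V (x) a) = rho (1_{V(x)W} + c D),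
     evaluated on v_i (x) w_k, coefficient of v_p (x) w_s *)
  ax12 : forall i k p s,
    \sum_(j : 'I_3) \sum_(m : 'I_3) \sum_(l : 'I_3) \sum_(r : 'I_3)
       ta k j m * tA i j l * ta l p r * tA r m s
    = ((q + q^-1) ^+ 2)^-1 * (kron i p * kron k s + tD i k * tc p s);
  (* (A (x) 1_V)(1_V (x) a)(1_V (x) A)(a (x) 1_V) = rho (1_{W(x)V} + d C),
     evaluated on w_k (x) v_i, coefficient of w_s (x) v_r *)
  ax13 : forall k i s r,
    \sum_(j : 'I_3) \sum_(m : 'I_3) \sum_(l : 'I_3) \sum_(p : 'I_3)
       ta k j m * tA m i l * ta l p r * tA j p s
    = ((q + q^-1) ^+ 2)^-1 * (kron k s * kron i r + tC k i * td s r)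
}.

(* Letters of the alphabet: basis of V (+) W; inl i = v_i, inr k = w_k. *)
Definition letter := ('I_3 + 'I_3)%type.

(* Elements of T(V (+) W): coefficient functions on words (monomials). *)
Definition tens (R : realType) := seq letter -> R[i].

Definition fin_supp (R : realType) (f : tens R) : Prop :=
  exists N : nat, forall w : seq letter, (N <= size w)%N -> f w = 0.

Definition tmul (R : realType) (f g : tens R) : tens R :=
  fun w => \sum_(j < (size w).+1) f (take j w) * g (drop j w).

Definition isV (x : letter) : bool := if x is inl _ then true else false.
Definition isW (x : letter) : bool := if x is inr _ then true else false.

Definition homog (R : realType) (k l : nat) (f : tens R) : Prop :=
  forall w, f w != 0 -> count isV w = k /\ count isW w = l.

Section Gens.
Variables (R : realType) (L : BQD R).

(* G = (1_V (x) A)(a (x) 1_V) : W (x) V -> V (x) W, coefficient of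
   v_p (x) w_s in G(w_l (x) v_m) *)
Definition Gco (l m p s : 'I_3) : R[i] :=
  \sum_(r : 'I_3) ta L l p r * tA L r m s.

(* a(w_k), spanning Im a *)
Definition gen_a (k : 'I_3) : tens R := fun w =>
  match w with [:: inl i; inl j] => ta L k i j | _ => 0 end.
(* b(v_m), spanning Im b *)
Definition gen_b (m : 'I_3) : tens R := fun w =>
  match w with [:: inr k; inr l] => tb L m k l | _ => 0 end.
(* c(1), spanning Im c *)
Definition gen_c : tens R := fun w =>
  match w with [:: inl i; inr k] => tc L i k | _ => 0 end.
(* w_l (x) v_m + (q + q^-1) G(w_l (x) v_m) *)
Definition gen_rel (l m : 'I_3) : tens R := fun w =>
  match w with
  | [:: inr l'; inl m'] => kron l' l * kron m' m
  | [:: inl p; inr s] => (q L + (q L)^-1) * Gco l m p s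
  | _ => 0 end.

(* By linearity, w (x) v + (q+q^-1) G(w (x) v) for all v, w is spanned by the
   basis cases, and Im a, Im b, Im c are spanned by images of bases. *)
Definition is_gen (g : tens R) : Prop :=
  (exists k, g = gen_a k) \/ (exists m, g = gen_b m) \/ g = gen_c \/
  (exists l m, g = gen_rel l m).

Inductive in_I : tens R -> Prop :=
  | in_I0 : in_I (fun _ => 0)
  | in_Iadd f g : in_I f -> in_I g -> in_I (fun w => f w + g w)
  | in_Igen x g y : fin_supp x -> fin_supp y -> is_gen g ->
      in_I (tmul (tmul x g) y)
  | in_Iext f g : in_I f -> (forall w, f w = g w) -> in_I g.

Definition I_comp (k l : nat) (f : tens R) : Prop := in_I f /\ homog k l f.

End Gens.

Definition has_dim (R : realType) (P : tens R -> Prop) (n : nat) : Prop :=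
  exists bas : 'I_n -> tens R,
    (forall j, P (bas j)) /\
    (forall cf : 'I_n -> R[i],
        (forall w, \sum_(j < n) cf j * bas j w = 0) -> forall j, cf j = 0) /\
    (forall f, P f -> exists cf : 'I_n -> R[i],
        forall w, f w = \sum_(j < n) cf j * bas j w).

(* Main.v *)
Require Import Defs.
From HB Require Import structures.
From mathcomp Require Import all_boot all_algebra.
From mathcomp Require Import reals complex.
From mathcomp Require Import ring.
From Stdlib Require Import Setoid Morphisms.
Set Implicit Arguments. Unset Strict Implicit. Unset Printing Implicit Defensive.
Import GRing.Theory Num.Theory.
Local Open Scope ring_scope.


#[global] Instance bigop_proper (R : Type) (I : Type) :
  Proper (eq ==> eq ==> pointwise_relation I eq ==> eq) (@bigop R I).
Proof.
move=> x _ <- r _ <- F G H. rewrite unlock /reducebig. elim: r => //= i r ->. by rewrite H.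
Qed.

Section Gen.
Variable R : realType.
Implicit Types (f g h x y : tens R) (w u : seq letter).

Definition delta u : tens R := fun w => (w == u)%:R.

Lemma fin_supp_delta u : fin_supp (delta u).
Proof.
exists (size u).+1 => w Hw; rewrite /delta; case: eqP => // Ew.
by move: Hw; rewrite Ew ltnn.
Qed.

Definition L3 g (l : letter) : tens R := tmul (tmul (delta [::]) g) (delta [:: l]).
Definition R3 (l : letter) g : tens R := tmul (tmul (delta [:: l]) g) (delta [::]).

Definition sz2 g := forall w, size w != 2 -> g w = 0.

Lemma tmul3 x g y a b c : sz2 g ->
  tmul (tmul x g) y [:: a; b; c] =
    x [::] * g [:: a; b] * y [:: c] + x [:: a] * g [:: b; c] * y [::].
Proof.
move=> Hg; rewrite /tmul /= !big_ord_recl !big_ord0 /=.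
rewrite !(Hg [::]) // !(Hg [:: a]) // !(Hg [:: b]) // !(Hg [:: c]) // !(Hg [:: a; b; c]) //.
by rewrite !(mulr0, mul0r, addr0, add0r).
Qed.

Lemma L3E g l a b c : sz2 g -> L3 g l [:: a; b; c] = g [:: a; b] * (c == l)%:R.
Proof. move=> Hg; rewrite /L3 tmul3 // /delta /= eqseq_cons andbT. by rewrite mul1r !mulr0 addr0. Qed.

Lemma R3E g l a b c : sz2 g -> R3 l g [:: a; b; c] = (a == l)%:R * g [:: b; c].
Proof. move=> Hg; rewrite /R3 tmul3 // /delta /= eqseq_cons andbT. by rewrite !(mulr0, mul0r, add0r, mulr1). Qed.

Lemma homog_tmul k1 l1 k2 l2 f g : homog k1 l1 f -> homog k2 l2 g ->
  homog (k1 + k2)%N (l1 + l2)%N (tmul f g).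
Proof.
move=> Hf Hg w; rewrite /tmul => Hne.
case: (pickP (fun j : 'I_(size w).+1 => f (take j w) * g (drop j w) != 0)) => [j Hj|H0]; last first.
  move: Hne; rewrite big1 ?eqxx // => j _. by move: (H0 j) => /= /negbFE/eqP.
move: Hj; rewrite mulf_eq0 negb_or => /andP[/Hf[e1 e2] /Hg[e3 e4]].
by rewrite -(cat_take_drop j w) !count_cat e1 e2 e3 e4.
Qed.

Lemma homog_delta u : homog (count isV u) (count isW u) (delta u).
Proof. move=> w; rewrite /delta; case: (w =P u) => [-> //|_]; by rewrite eqxx. Qed.

Lemma homog_eq k l k' l' f : homog k l f -> k = k' -> l = l' -> homog k' l' f.
Proof. by move=> H <- <-. Qed.

Lemma homog_L3 k l g (lt : letter) : homog k l g ->
  homog (k + isV lt)%N (l + isW lt)%N (L3 g lt).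
Proof.
move=> Hg; have H := homog_tmul (homog_tmul (@homog_delta [::]) Hg) (@homog_delta [:: lt]).
apply: homog_eq H _ _ => /=; by rewrite ?addn0 ?add0n.
Qed.

Lemma homog_R3 k l g (lt : letter) : homog k l g ->
  homog (isV lt + k)%N (isW lt + l)%N (R3 lt g).
Proof.
move=> Hg; have H := homog_tmul (homog_tmul (@homog_delta [:: lt]) Hg) (@homog_delta [::]).
apply: homog_eq H _ _ => /=; by rewrite ?addn0 ?add0n.
Qed.

Lemma countVW w : (count isV w + count isW w = size w)%N.
Proof. elim: w => //= -[a|a] w IH; rewrite -IH /=; by rewrite ?(add0n, add1n, addSn, addnS). Qed.

Definition res k l f : tens R := fun w =>
  if (count isV w == k) && (count isW w == l) then f w else 0.

Lemma res_id k l f : homog k l f -> forall w, res k l f w = f w.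
Proof.
move=> Hf w; rewrite /res; case: ifP => // /negbT H.
case: (f w =P 0) => // /eqP /Hf [e1 e2]. by rewrite e1 e2 !eqxx in H.
Qed.

Lemma res_0 k l k' l' f : homog k' l' f -> (k != k') || (l != l') ->
  forall w, res k l f w = 0.
Proof.
move=> Hf Hn w; rewrite /res; case: ifP => // /andP[/eqP e1 /eqP e2].
case: (f w =P 0) => // /eqP /Hf [e3 e4]. by move: Hn; rewrite -e1 -e2 e3 e4 !eqxx.
Qed.

Section Span.
Variables (T : finType) (S : pred T) (fam : T -> tens R).

Definition spanP h := exists cf : T -> R[i], forall w, h w = \sum_(t in S) cf t * fam t w.

Lemma span_ext h h' : spanP h -> (forall w, h w = h' w) -> spanP h'.
Proof. by move=> [cf H] E; exists cf => w; rewrite -E. Qed.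

Lemma span0 : spanP (fun _ => 0).
Proof. by exists (fun _ => 0) => w; rewrite big1 // => t _; rewrite mul0r. Qed.

Lemma spanD h h' : spanP h -> spanP h' -> spanP (fun w => h w + h' w).
Proof.
move=> [cf H] [cf' H']; exists (fun t => cf t + cf' t) => w.
by rewrite H H' -big_split /=; apply: eq_bigr => t _; rewrite mulrDl.
Qed.

Lemma spanZ (c : R[i]) h : spanP h -> spanP (fun w => c * h w).
Proof.
move=> [cf H]; exists (fun t => c * cf t) => w.
by rewrite H big_distrr /=; apply: eq_bigr => t _; rewrite mulrA.
Qed.

Lemma span_fam t : t \in S -> spanP (fam t).
Proof.
move=> tS; exists (fun t' => (t' == t)%:R) => w.
rewrite (bigD1 t) //= eqxx mul1r big1 ?addr0 // => t' /andP[_ /negbTE ->]; by rewrite mul0r.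
Qed.

Lemma span_sum (I : finType) (F : I -> tens R) : (forall i, spanP (F i)) ->
  spanP (fun w => \sum_i F i w).
Proof.
move=> HF; rewrite /spanP.
have: forall s : seq I, spanP (fun w => \sum_(i <- s) F i w).
  elim=> [|i s IH].
    by apply: span_ext span0 _ => w; rewrite big_nil.
  by apply: span_ext (spanD (HF i) IH) _ => w; rewrite big_cons.
by move/(_ (index_enum I)).
Qed.

Lemma spanB h h' : spanP h -> spanP h' -> spanP (fun w => h w - h' w).
Proof.
move=> H H'; apply: span_ext (spanD H (spanZ (-1) H')) _ => w.
by rewrite mulN1r.
Qed.

End Span.

Lemma sum_letter_eq (F : letter -> R[i]) (c : letter) :
  \sum_(l : letter) F l * (c == l)%:R = F c.
Proof.
rewrite (bigD1 c) //= eqxx mulr1 big1 ?addr0 // => l /negbTE.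
by rewrite eq_sym => ->; rewrite mulr0.
Qed.

Lemma sum_letter_eq' (F : letter -> R[i]) (c : letter) :
  \sum_(l : letter) F l * (l == c)%:R = F c.
Proof.
by rewrite -(sum_letter_eq F c); apply: eq_bigr => l _; rewrite eq_sym.
Qed.

Lemma in_I_res (L : BQD R) k l (T : finType) (S : pred T) (fam : T -> tens R) :
  (k + l = 3)%N ->
  (forall g, is_gen L g -> sz2 g) ->
  (forall g, is_gen L g -> forall lt, spanP S fam (res k l (L3 g lt)) /\ spanP S fam (res k l (R3 lt g))) ->
  forall f, in_I L f -> spanP S fam (res k l f).
Proof.
move=> Hkl Hsz Hgen f; elim=> {f}.
- by apply: span_ext (span0 S fam) _ => w; rewrite /res; case: ifP.
- move=> f g _ Hf _ Hg; apply: span_ext (spanD Hf Hg) _ => w.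
  by rewrite /res; case: ifP => //; rewrite addr0.
- move=> x g y _ _ Hg.
  have H1 := fun lt => proj1 (Hgen g Hg lt).
  have H2 := fun lt => proj2 (Hgen g Hg lt).
  apply: span_ext (spanD (span_sum (fun lt => spanZ (x [::] * y [:: lt]) (H1 lt)))
                        (span_sum (fun lt => spanZ (x [:: lt] * y [::]) (H2 lt)))) _ => w.
  rewrite /res; case: ifP => [/andP[/eqP e1 /eqP e2]|_]; last first.
    by rewrite !big1 ?addr0 // => *; rewrite mulr0.
  have: size w = 3 by rewrite -countVW e1 e2.
  case: w e1 e2 => [|a [|b [|c [|d w]]]] //= e1 e2 _.
  rewrite tmul3; last exact: Hsz.
  have -> : \sum_i0 x [::] * y [:: i0] * L3 g i0 [:: a; b; c] = \sum_i0 (x [::] * y [:: i0] * g [:: a; b]) * (c == i0)%:R.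
    by apply: eq_bigr => i0 _; rewrite L3E ?mulrA //; exact: Hsz.
  have -> : \sum_i0 x [:: i0] * y [::] * R3 i0 g [:: a; b; c] = \sum_i0 (x [:: i0] * y [::] * g [:: b; c]) * (a == i0)%:R.
    by apply: eq_bigr => i0 _; rewrite R3E ?[(_ == i0)%:R * _]mulrC ?mulrA ?(eq_sym a) //; exact: Hsz.
  rewrite !sum_letter_eq. congr (_ + _); rewrite -!mulrA; congr (_ * _); by rewrite mulrC.
- move=> f g _ Hf E; apply: span_ext Hf _ => w; by rewrite /res E.
Qed.

Lemma has_dim_fam (P : tens R -> Prop) (T : finType) (S : pred T) (fam : T -> tens R) :
  (forall t, t \in S -> P (fam t)) ->
  (forall cf : T -> R[i], (forall w, \sum_(t in S) cf t * fam t w = 0) -> forall t, t \in S -> cf t = 0) ->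
  (forall f, P f -> spanP S fam f) ->
  has_dim P #|S|.
Proof.
move=> HP Hind Hsp.
exists (fun j => fam (enum_val j)); split; [|split].
- by move=> j; apply: HP; exact: enum_valP.
- move=> cf' H j.
  have x0S : enum_val j \in S by exact: enum_valP.
  pose cf t := cf' (enum_rank_in x0S t).
  have := Hind cf _ (enum_val j) x0S.
  rewrite /cf enum_valK_in; apply => w.
  rewrite (big_enum_val (fun t => cf' (enum_rank_in x0S t) * fam t w)) /=.
  rewrite -[RHS](H w); apply: eq_bigr => i _; by rewrite enum_valK_in.
- move=> f /Hsp [cf Hf]; exists (fun j => cf (enum_val j)) => w.
  by rewrite Hf (big_enum_val (fun t => cf t * fam t w)).
Qed.

Lemma has_dim_gen (L : BQD R) k l n (T : finType) (S : pred T) (fam : T -> tens R) :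
  (k + l = 3)%N -> #|S| = n ->
  (forall g, is_gen L g -> sz2 g) ->
  (forall t, t \in S -> I_comp L k l (fam t)) ->
  (forall cf : T -> R[i], (forall w, \sum_(t in S) cf t * fam t w = 0) -> forall t, t \in S -> cf t = 0) ->
  (forall g, is_gen L g -> forall lt, spanP S fam (res k l (L3 g lt)) /\ spanP S fam (res k l (R3 lt g))) ->
  has_dim (I_comp L k l) n.
Proof.
move=> Hkl <- Hsz HP Hind Hgen; apply: has_dim_fam HP Hind _ => f [Hf Hh].
apply: span_ext (in_I_res Hkl Hsz Hgen Hf) _ => w; exact: res_id.
Qed.

End Gen.


Definition i0 : 'I_3 := @Ordinal 3 0 isT.
Definition i1 : 'I_3 := @Ordinal 3 1 isT.
Definition i2 : 'I_3 := @Ordinal 3 2 isT.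

Lemma sum3 (V : nmodType) (F : 'I_3 -> V) : \sum_(i : 'I_3) F i = F i0 + F i1 + F i2.
Proof.
rewrite !big_ord_recr big_ord0 /= add0r. congr (F _ + F _ + F _); exact: val_inj.
Qed.

Lemma ord3P (P : 'I_3 -> Prop) : P i0 -> P i1 -> P i2 -> forall i, P i.
Proof.
move=> H0 H1 H2 [[|[|[|n]]] Hn] //.
- by have -> : Ordinal Hn = i0 by apply: val_inj.
- by have -> : Ordinal Hn = i1 by apply: val_inj.
- by have -> : Ordinal Hn = i2 by apply: val_inj.
Qed.

Section BQDfacts.
Variables (R : realType) (L : BQD R).
Local Notation A := (tA L). Local Notation a := (ta L).
Local Notation B := (tB L). Local Notation b := (tb L).
Local Notation C := (tC L). Local Notation c := (tc L).
Local Notation D := (tD L). Local Notation d := (td L).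
Local Notation w := (om L).
Local Notation q := (q L).
Local Notation G := (Gco L).
Local Notation rho := (((q + q^-1) ^+ 2)^-1).
Local Notation kap := (q ^- 2 + 1 + q ^+ 2).

Lemma kron_ii (i : 'I_3) : kron i i = 1 :> R[i].
Proof. by rewrite /kron eqxx. Qed.
Lemma kron_ij (i j : 'I_3) : i != j -> kron i j = 0 :> R[i].
Proof. by rewrite /kron => /negbTE ->. Qed.
Lemma kronC (i j : 'I_3) : kron i j = kron j i :> R[i].
Proof. by rewrite /kron eq_sym. Qed.

Lemma sumKr (F : 'I_3 -> R[i]) k : \sum_l F l * kron l k = F k.
Proof.
rewrite (bigD1 k) //= kron_ii mulr1 big1 ?addr0 // => l /= Hl.
by rewrite kron_ij ?mulr0.
Qed.
Lemma sumKl (F : 'I_3 -> R[i]) k : \sum_l kron k l * F l = F k.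
Proof. rewrite -[RHS](sumKr F k); apply: eq_bigr => l _; by rewrite mulrC kronC. Qed.

Lemma om_neq0 : w != 0.
Proof. apply/eqP => H; have := om3 L; rewrite H expr0n /= => /eqP; by rewrite eq_sym oner_eq0. Qed.

Lemma q_neq0' : q != 0. Proof. exact: q_neq0. Qed.

Lemma s_neq0 : q + q^-1 != 0.
Proof.
apply/eqP => H; have := q2_neqN1 L; rewrite -[X in X != _]subr0 -(mulr0 q) -H.
by rewrite mulrDr divff ?q_neq0' // expr2 opprD addrA subrr add0r eqxx.
Qed.

Lemma rho_neq0 : rho != 0.
Proof. by rewrite invr_eq0 expf_neq0 // s_neq0. Qed.

Lemma s2E : (q + q^-1) ^+ 2 * q ^+ 2 = (q ^+ 2 + 1) ^+ 2.
Proof. have := q_neq0'; move=> Hq; field. exact: Hq. Qed.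

Lemma three_neq0 : (3%:R : R[i]) != 0.
Proof. by rewrite pnatr_eq0. Qed.
Lemma two_neq0 : (2%:R : R[i]) != 0.
Proof. by rewrite pnatr_eq0. Qed.

Lemma s2_neq1 : (q + q^-1) ^+ 2 != 1.
Proof.
apply/eqP => H.
have H1 : (q ^+ 2) ^+ 2 + q ^+ 2 + 1 = 0.
  have := s2E; rewrite H mul1r => E.
  (transitivity ((q ^+ 2 + 1) ^+ 2 - q ^+ 2); first by ring).
  by rewrite -E subrr.
have H3 : (q ^+ 2) ^+ 3 = 1.
  have E : (q ^+ 2) ^+ 3 - 1 = (q ^+ 2 - 1) * ((q ^+ 2) ^+ 2 + q ^+ 2 + 1) by ring.
  by apply/eqP; rewrite -subr_eq0 E H1 mulr0.
case: (q_root L) => [Hq|Hn].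
  move: H1; rewrite Hq expr1n => H1.
  have := three_neq0; rewrite -H1. (have -> : (1 + 1 + 1 : R[i]) = 3%:R by ring). by rewrite eqxx.
by move: (Hn 3%N isT); rewrite H3 eqxx.
Qed.

Lemma rho_neq1 : rho != 1.
Proof. by rewrite invr_eq1 s2_neq1. Qed.

Lemma kap_neq1 : kap != 1.
Proof.
apply/eqP => H.
have Hq := q_neq0'.
have H1 : (q ^+ 2) ^+ 2 + 1 = 0.
  have E : (q ^+ 2) ^+ 2 + 1 = q ^+ 2 * (kap - 1) by field.
  by rewrite E H subrr mulr0.
have H4 : (q ^+ 2) ^+ 4 = 1.
  have E : (q ^+ 2) ^+ 4 - 1 = ((q ^+ 2) ^+ 2 - 1) * ((q ^+ 2) ^+ 2 + 1) by ring.
  by apply/eqP; rewrite -subr_eq0 E H1 mulr0.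
case: (q_root L) => [Hq2|Hn].
  move: H1; rewrite Hq2 expr1n => H1.
  have := two_neq0; rewrite -H1. have -> : (1 + 1 : R[i]) = 2%:R by ring. by rewrite eqxx.
by move: (Hn 4%N isT); rewrite H4 eqxx.
Qed.

Lemma Cc k k' : \sum_i C k i * c i k' = kron k k'.
Proof.
pose M : 'M[R[i]]_3 := \matrix_(i, k) c i k.
pose N : 'M[R[i]]_3 := \matrix_(k, j) C k j.
have H : M *m N = 1%:M.
  apply/matrixP => i j; rewrite !mxE.
  rewrite (_ : (i == j)%:R = kron i j) // -(ax1 L i j); apply: eq_bigr => l _; by rewrite !mxE.
have := mulmx1C H => /matrixP /(_ k k'); rewrite !mxE => E; rewrite /kron -E.
by apply: eq_bigr => l _; rewrite !mxE.
Qed.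

Lemma dD l t : \sum_j d l j * D j t = kron l t.
Proof.
pose M : 'M[R[i]]_3 := \matrix_(i, k) D i k.
pose N : 'M[R[i]]_3 := \matrix_(k, j) d k j.
have H : M *m N = 1%:M.
  apply/matrixP => i j; rewrite !mxE.
  rewrite (_ : (i == j)%:R = kron i j) // -(ax2 L i j); apply: eq_bigr => k _; by rewrite !mxE.
have := mulmx1C H => /matrixP /(_ l t); rewrite !mxE => E; rewrite /kron -E.
by apply: eq_bigr => k _; rewrite !mxE.
Qed.


Lemma sumKl' (F : 'I_3 -> R[i]) k : \sum_l kron l k * F l = F k.
Proof. rewrite -[RHS](sumKr F k); apply: eq_bigr => l _; by rewrite mulrC. Qed.
Lemma sumKr' (F : 'I_3 -> R[i]) k : \sum_l F l * kron k l = F k.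
Proof. rewrite -[RHS](sumKr F k); apply: eq_bigr => l _; by rewrite kronC. Qed.

Lemma om3' : w ^+ 3 = 1. Proof. exact: om3. Qed.

Lemma dA l n s2 : \sum_r d l r * A r n s2 = w * b n l s2.
Proof. by rewrite -(ax7 L) mulrA -exprS om3' mul1r. Qed.

Lemma da j i m : \sum_k d k j * a k i m = w ^+ 2 * \sum_k c i k * a k m j.
Proof. by rewrite (ax5 L) mulrA -exprSr om3' mul1r. Qed.

Lemma Bb m j : \sum_k \sum_l b m k l * B k l j = kron m j.
Proof.
transitivity (\sum_k \sum_l (\sum_i c i l * A m i k) * (w * \sum_i' a l i' j * C k i')).
  apply: eq_bigr => k _; apply: eq_bigr => l _. by rewrite (ax9 L) (ax8 L).
transitivity (w * \sum_i \sum_i' (\sum_k A m i k * C k i') * (\sum_l c i l * a l i' j)).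
  rewrite !sum3; ring.
transitivity (w * \sum_i \sum_i' (w * \sum_k A i i' k * D m k) * (w * \sum_l d l j * a l i i')).
  congr (_ * _); apply: eq_bigr => i _; apply: eq_bigr => i' _. by rewrite (ax4 L) (ax5 L).
transitivity (w ^+ 3 * \sum_k \sum_l D m k * d l j * (\sum_i \sum_i' a l i i' * A i i' k)).
  rewrite !sum3; ring.
transitivity (\sum_k \sum_l D m k * d l j * kron l k).
  rewrite om3' mul1r. apply: eq_bigr => k _; apply: eq_bigr => l _. by rewrite (ax3 L).
transitivity (\sum_k D m k * d k j).
  apply: eq_bigr => k _. by rewrite (sumKr (fun l => D m k * d l j)).
exact: (ax2 L).
Qed.

Lemma cB p t m : \sum_s c p s * B s t m = w * a t p m.
Proof.
transitivity (\sum_s c p s * \sum_j a s m j * D j t).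
  apply: eq_bigr => s _; by rewrite (ax6 L).
transitivity (\sum_j (\sum_s c p s * a s m j) * D j t).
  rewrite !sum3; ring.
transitivity (\sum_j (w * \sum_l d l j * a l p m) * D j t).
  apply: eq_bigr => j _; by rewrite (ax5 L).
transitivity (w * \sum_l a l p m * (\sum_j d l j * D j t)).
  rewrite !sum3; ring.
transitivity (w * \sum_l a l p m * kron l t).
  congr (_ * _); apply: eq_bigr => l _; by rewrite dD.
by rewrite sumKr.
Qed.

Lemma DbA p m t : \sum_s D p s * b m s t = w ^+ 2 * A p m t.
Proof.
transitivity (\sum_s D p s * (w ^+ 2 * \sum_j d s j * A j m t)).
  apply: eq_bigr => s _; by rewrite (ax7 L).
transitivity (w ^+ 2 * \sum_j (\sum_s D p s * d s j) * A j m t).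
  rewrite !sum3; ring.
transitivity (w ^+ 2 * \sum_j kron p j * A j m t).
  congr (_ * _); apply: eq_bigr => j _; by rewrite (ax2 L).
by rewrite sumKl.
Qed.

Lemma I1 p n p2 s2 : \sum_s c p s * G s n p2 s2 = w ^+ 2 * \sum_k b n k s2 * a k p p2.
Proof.
transitivity (\sum_r (\sum_s c p s * a s p2 r) * A r n s2).
  rewrite /Gco !sum3; ring.
transitivity (\sum_r (w * \sum_l d l r * a l p p2) * A r n s2).
  apply: eq_bigr => r _; by rewrite (ax5 L).
transitivity (w * \sum_l a l p p2 * (\sum_r d l r * A r n s2)).
  rewrite !sum3; ring.
transitivity (w * \sum_l a l p p2 * (w * b n l s2)).
  congr (_ * _); apply: eq_bigr => l _; by rewrite dA.
rewrite !sum3; ring.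
Qed.

Lemma I2 k j p p2 s2 :
  \sum_i \sum_i' \sum_s a k i i' * G j i p s * G s i' p2 s2
  = rho * (a j p p2 * kron k s2 + B j k p * c p2 s2).
Proof.
transitivity (\sum_r a j p r * (\sum_i \sum_i' \sum_s \sum_r2 a k i i' * A r i s * a s p2 r2 * A r2 i' s2)).
  rewrite /Gco !sum3; ring.
transitivity (\sum_r a j p r * (rho * (kron r p2 * kron k s2 + D r k * c p2 s2))).
  apply: eq_bigr => r _; by rewrite (ax12 L).
transitivity (rho * ((\sum_r a j p r * kron r p2) * kron k s2 + (\sum_r a j p r * D r k) * c p2 s2)).
  rewrite !sum3; ring.
by rewrite sumKr (ax6 L).
Qed.

Lemma I3 j p s t : \sum_p' c p' t * G j p' p s = \sum_i' a j p i' * b i' s t.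
Proof.
transitivity (\sum_r a j p r * (\sum_p' c p' t * A r p' s)).
  rewrite /Gco !sum3; ring.
apply: eq_bigr => r _; by rewrite (ax9 L).
Qed.

Lemma I4 m n p s t :
  \sum_k \sum_l \sum_p' b m k l * G k p' p s * G l n p' t
  = rho * (w ^+ 2 * kron p m * b n s t + w * A m n t * c p s).
Proof.
transitivity (\sum_k \sum_l \sum_p' (\sum_i c i l * A m i k) * G k p' p s * G l n p' t).
  apply: eq_bigr => k _; apply: eq_bigr => l _; apply: eq_bigr => p' _. by rewrite (ax9 L).
transitivity (\sum_k \sum_p' \sum_i A m i k * G k p' p s * (\sum_l c i l * G l n p' t)).
  rewrite !sum3; ring.
transitivity (\sum_k \sum_p' \sum_i A m i k * G k p' p s * (w ^+ 2 * \sum_k' b n k' t * a k' i p')).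
  apply: eq_bigr => k _; apply: eq_bigr => p' _; apply: eq_bigr => i _. by rewrite I1.
transitivity (w ^+ 2 * \sum_k' b n k' t * (\sum_i \sum_p' \sum_k \sum_r a k' i p' * A m i k * a k p r * A r p' s)).
  rewrite /Gco !sum3; ring.
transitivity (w ^+ 2 * \sum_k' b n k' t * (rho * (kron m p * kron k' s + D m k' * c p s))).
  congr (_ * _); apply: eq_bigr => k' _; by rewrite (ax12 L).
transitivity (w ^+ 2 * rho * (kron m p * (\sum_k' b n k' t * kron k' s) + c p s * (\sum_k' D m k' * b n k' t))).
  rewrite !sum3; ring.
rewrite sumKr DbA.
transitivity (rho * (w ^+ 2 * kron p m * b n s t + w ^+ 3 * w * A m n t * c p s)).
  rewrite kronC; ring.
by rewrite om3' mul1r.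
Qed.

Lemma L1 m2 u s m : \sum_t2 b m2 t2 u * B s t2 m = w ^+ 2 * G s m2 m u.
Proof.
transitivity (\sum_t2 (w ^+ 2 * \sum_j d t2 j * A j m2 u) * (w * \sum_i a t2 i m * C s i)).
  apply: eq_bigr => t2 _; by rewrite (ax7 L) (ax8 L).
transitivity (w ^+ 3 * \sum_i \sum_j C s i * A j m2 u * (\sum_t2 d t2 j * a t2 i m)).
  rewrite !sum3; ring.
transitivity (\sum_i \sum_j C s i * A j m2 u * (w ^+ 2 * \sum_k c i k * a k m j)).
  rewrite om3' mul1r; apply: eq_bigr => i _; apply: eq_bigr => j _; by rewrite da.
transitivity (w ^+ 2 * \sum_k (\sum_i C s i * c i k) * (\sum_j a k m j * A j m2 u)).
  rewrite !sum3; ring.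
transitivity (w ^+ 2 * \sum_k kron s k * (\sum_j a k m j * A j m2 u)).
  congr (_ * _); apply: eq_bigr => k _; by rewrite Cc.
by rewrite sumKl.
Qed.

Lemma L2 m s' u m' : \sum_t b m s' t * B t u m' = w * \sum_r a u r m' * A m r s'.
Proof.
transitivity (\sum_t (\sum_i c i t * A m i s') * (w * \sum_i' a u i' m' * C t i')).
  apply: eq_bigr => t _; by rewrite (ax9 L) (ax8 L).
transitivity (w * \sum_i \sum_i' A m i s' * a u i' m' * (\sum_t c i t * C t i')).
  rewrite !sum3; ring.
transitivity (w * \sum_i \sum_i' A m i s' * a u i' m' * kron i i').
  congr (_ * _); apply: eq_bigr => i _; apply: eq_bigr => i' _; by rewrite (ax1 L).
transitivity (w * \sum_i A m i s' * (\sum_i' kron i i' * a u i' m')).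
  rewrite !sum3; ring.
congr (_ * _); apply: eq_bigr => i _; rewrite sumKl; ring.
Qed.

Lemma K3 u s t : w * \sum_m c m u * b m s t = \sum_m d s m * b m t u.
Proof.
transitivity (w * \sum_m c m u * (w ^+ 2 * \sum_j d s j * A j m t)).
  congr (_ * _); apply: eq_bigr => m _; by rewrite (ax7 L).
transitivity (w ^+ 3 * \sum_m \sum_j c m u * d s j * A j m t).
  rewrite !sum3; ring.
rewrite om3' mul1r.
transitivity (\sum_m d s m * \sum_i c i u * A m i t).
  rewrite !sum3; ring.
apply: eq_bigr => m _; by rewrite (ax9 L).
Qed.

End BQDfacts.


Section Crux.
Variables (R : realType) (L : BQD R).
Local Notation A := (tA L). Local Notation a := (ta L).
Local Notation B := (tB L). Local Notation b := (tb L).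
Local Notation C := (tC L). Local Notation c := (tc L).
Local Notation D := (tD L). Local Notation d := (td L).
Local Notation w := (om L).
Local Notation q := (q L).
Local Notation G := (Gco L).
Local Notation rho := (((q + q^-1) ^+ 2)^-1).
Local Notation kap := (q ^- 2 + 1 + q ^+ 2).

Lemma sum0 (F : 'I_3 -> R[i]) : (forall i, F i = 0) -> \sum_i F i = 0.
Proof. by move=> H; rewrite big1 // => i _. Qed.

Lemma rho_cancel (x y : R[i]) : x = rho * x + y -> x = (1 - rho)^-1 * y.
Proof.
move=> H; have Hn : 1 - rho != 0 by rewrite subr_eq0 eq_sym rho_neq1.
apply: (mulfI Hn); rewrite mulrA divff // mul1r.
by rewrite mulrBl mul1r {1}H; ring.
Qed.

Section F0.
Variables (X Y : 'I_3 -> 'I_3 -> R[i]).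
Hypothesis H : forall p r s, \sum_k Y k s * a k p r + \sum_k X p k * a k r s = 0.

Lemma F0a p l : X p l = - \sum_r \sum_s \sum_k Y k s * a k p r * A r s l.
Proof.
have E0 : \sum_r \sum_s (\sum_k Y k s * a k p r + \sum_k X p k * a k r s) * A r s l = 0.
  by apply: sum0 => r; apply: sum0 => s; rewrite H mul0r.
have E1 : \sum_r \sum_s (\sum_k Y k s * a k p r + \sum_k X p k * a k r s) * A r s l
   = \sum_r \sum_s \sum_k Y k s * a k p r * A r s l + \sum_k X p k * (\sum_r \sum_s a k r s * A r s l).
  rewrite !sum3; ring.
have E2 : \sum_k X p k * (\sum_r \sum_s a k r s * A r s l) = X p l.
  rewrite -[RHS](sumKr (X p) l); apply: eq_bigr => k _; by rewrite (ax3 L).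
apply/eqP; rewrite -subr_eq0 opprK addrC -E2 -E1 E0 //.
Qed.

Lemma F0b l s : Y l s = - \sum_p \sum_r \sum_k X p k * a k r s * A p r l.
Proof.
have E0 : \sum_p \sum_r (\sum_k Y k s * a k p r + \sum_k X p k * a k r s) * A p r l = 0.
  by apply: sum0 => p; apply: sum0 => r; rewrite H mul0r.
have E1 : \sum_p \sum_r (\sum_k Y k s * a k p r + \sum_k X p k * a k r s) * A p r l
   = \sum_k Y k s * (\sum_p \sum_r a k p r * A p r l) + \sum_p \sum_r \sum_k X p k * a k r s * A p r l.
  rewrite !sum3; ring.
have E2 : \sum_k Y k s * (\sum_p \sum_r a k p r * A p r l) = Y l s.
  rewrite -[RHS](sumKr (fun k => Y k s) l); apply: eq_bigr => k _; by rewrite (ax3 L).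
apply/eqP; rewrite -subr_eq0 opprK -E2 -E1 E0 //.
Qed.

Definition Hk (p k l s : 'I_3) := \sum_r a k r s * A p r l.

Lemma F0a' p l : X p l = - \sum_k \sum_s Y k s * G k s p l.
Proof. rewrite F0a /Gco; congr (- _); rewrite !sum3; ring. Qed.

Lemma F0b' l s : Y l s = - \sum_p \sum_k X p k * Hk p k l s.
Proof. rewrite F0b /Hk; congr (- _); rewrite !sum3; ring. Qed.

Lemma GH p k2 p' s' : \sum_k \sum_s Hk p k2 k s * G k s p' s'
  = rho * (kron p p' * kron k2 s' + D p k2 * c p' s').
Proof.
rewrite -(ax12 L) /Hk /Gco; rewrite !sum3; ring.
Qed.

Lemma F0c p' s' : X p' s' = rho * X p' s' + rho * (\sum_p \sum_k X p k * D p k) * c p' s'.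
Proof.
rewrite {1}F0a'.
transitivity (- \sum_k \sum_s (- \sum_p \sum_k2 X p k2 * Hk p k2 k s) * G k s p' s').
  congr (- _); apply: eq_bigr => k _; apply: eq_bigr => s _; by rewrite F0b'.
transitivity (\sum_p \sum_k2 X p k2 * (\sum_k \sum_s Hk p k2 k s * G k s p' s')).
  rewrite !sum3; ring.
transitivity (\sum_p \sum_k2 X p k2 * (rho * (kron p p' * kron k2 s' + D p k2 * c p' s'))).
  apply: eq_bigr => p _; apply: eq_bigr => k2 _; by rewrite GH.
transitivity (rho * (\sum_p kron p p' * (\sum_k2 kron k2 s' * X p k2)) + rho * (\sum_p \sum_k X p k * D p k) * c p' s').
  rewrite !sum3; ring.
by rewrite sumKl' sumKl'.
Qed.

Lemma F0 k0 : c i0 k0 != 0 -> X i0 k0 = 0 -> (forall p k, X p k = 0) /\ (forall k s, Y k s = 0).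
Proof.
move=> Hc HX.
set S := \sum_p \sum_k X p k * D p k.
have HS : S = 0.
  have := F0c i0 k0; rewrite HX mulr0 add0r => /esym /eqP.
  rewrite !mulf_eq0 (negbTE (rho_neq0 L)) (negbTE Hc) orbF /= => /eqP; done.
have HX0 : forall p k, X p k = 0.
  move=> p k; have := F0c p k; rewrite -/S HS mulr0 mul0r.
  by move=> E; have := rho_cancel E; rewrite mulr0.
split => // k s; rewrite F0b; apply/eqP; rewrite oppr_eq0; apply/eqP.
by apply: sum0 => p; apply: sum0 => r; apply: sum0 => k'; rewrite HX0 !mul0r.
Qed.
End F0.

Section F3.
Variables (X Y : 'I_3 -> 'I_3 -> R[i]).
Hypothesis H : forall s t u, \sum_m X s m * b m t u + \sum_m Y m u * b m s t = 0.

Lemma F3a s m' : X s m' = - \sum_t \sum_u \sum_m Y m u * b m s t * B t u m'.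
Proof.
have E0 : \sum_t \sum_u (\sum_m X s m * b m t u + \sum_m Y m u * b m s t) * B t u m' = 0.
  by apply: sum0 => t; apply: sum0 => u; rewrite H mul0r.
have E1 : \sum_t \sum_u (\sum_m X s m * b m t u + \sum_m Y m u * b m s t) * B t u m'
   = \sum_m X s m * (\sum_t \sum_u b m t u * B t u m') + \sum_t \sum_u \sum_m Y m u * b m s t * B t u m'.
  rewrite !sum3; ring.
have E2 : \sum_m X s m * (\sum_t \sum_u b m t u * B t u m') = X s m'.
  rewrite -[RHS](sumKr (X s) m'); apply: eq_bigr => m _; by rewrite Bb.
apply/eqP; rewrite -subr_eq0 opprK -E2 -E1 E0 //.
Qed.

Lemma F3b m' u : Y m' u = - \sum_s \sum_t \sum_m X s m * b m t u * B s t m'.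
Proof.
have E0 : \sum_s \sum_t (\sum_m X s m * b m t u + \sum_m Y m u * b m s t) * B s t m' = 0.
  by apply: sum0 => s; apply: sum0 => t; rewrite H mul0r.
have E1 : \sum_s \sum_t (\sum_m X s m * b m t u + \sum_m Y m u * b m s t) * B s t m'
   = \sum_s \sum_t \sum_m X s m * b m t u * B s t m' + \sum_m Y m u * (\sum_s \sum_t b m s t * B s t m').
  rewrite !sum3; ring.
have E2 : \sum_m Y m u * (\sum_s \sum_t b m s t * B s t m') = Y m' u.
  rewrite -[RHS](sumKr (fun m => Y m u) m'); apply: eq_bigr => m _; by rewrite Bb.
apply/eqP; rewrite -subr_eq0 opprK addrC -E2 -E1 E0 //.
Qed.

Definition P1 m2 u s m := \sum_t2 b m2 t2 u * B s t2 m.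
Definition P2 m u s' m' := \sum_t b m s' t * B t u m'.

Lemma F3a' s m' : X s m' = - \sum_m \sum_u Y m u * P2 m u s m'.
Proof. rewrite F3a /P2; congr (- _); rewrite !sum3; ring. Qed.

Lemma F3b' m' u : Y m' u = - \sum_s \sum_m X s m * P1 m u s m'.
Proof. rewrite F3b /P1; congr (- _); rewrite !sum3; ring. Qed.

Lemma P12 s m2 s' m' : \sum_u \sum_m P1 m2 u s m * P2 m u s' m'
  = rho * (kron s s' * kron m2 m' + C s m2 * d s' m').
Proof.
transitivity (\sum_u \sum_m (w ^+ 2 * G s m2 m u) * (w * \sum_r a u r m' * A m r s')).
  apply: eq_bigr => u _; apply: eq_bigr => m _; by rewrite /P1 /P2 L1 L2.
transitivity (w ^+ 3 * (\sum_j \sum_m \sum_l \sum_p a s j m * A m m2 l * a l p m' * A j p s')).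
  rewrite /Gco !sum3; ring.
by rewrite om3' mul1r (ax13 L).
Qed.

Lemma F3c s' m' : X s' m' = rho * X s' m' + rho * (\sum_s \sum_m X s m * C s m) * d s' m'.
Proof.
rewrite {1}F3a'.
transitivity (- \sum_m \sum_u (- \sum_s \sum_m2 X s m2 * P1 m2 u s m) * P2 m u s' m').
  congr (- _); apply: eq_bigr => m _; apply: eq_bigr => u _; by rewrite F3b'.
transitivity (\sum_s \sum_m2 X s m2 * (\sum_u \sum_m P1 m2 u s m * P2 m u s' m')).
  rewrite !sum3; ring.
transitivity (\sum_s \sum_m2 X s m2 * (rho * (kron s s' * kron m2 m' + C s m2 * d s' m'))).
  apply: eq_bigr => s _; apply: eq_bigr => m2 _; by rewrite P12.
transitivity (rho * (\sum_s kron s s' * (\sum_m2 kron m2 m' * X s m2)) + rho * (\sum_s \sum_m X s m * C s m) * d s' m').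
  rewrite !sum3; ring.
by rewrite sumKl' sumKl'.
Qed.

Lemma F3 j0 m0 : d j0 m0 != 0 -> X j0 m0 = 0 -> (forall s m, X s m = 0) /\ (forall m u, Y m u = 0).
Proof.
move=> Hd HX.
set S := \sum_s \sum_m X s m * C s m.
have HS : S = 0.
  have := F3c j0 m0; rewrite HX mulr0 add0r => /esym /eqP.
  rewrite !mulf_eq0 (negbTE (rho_neq0 L)) (negbTE Hd) orbF /= => /eqP; done.
have HX0 : forall s m, X s m = 0.
  move=> s m; have := F3c s m; rewrite -/S HS mulr0 mul0r.
  by move=> E; have := rho_cancel E; rewrite mulr0.
split => // m u; rewrite F3b; apply/eqP; rewrite oppr_eq0; apply/eqP.
by apply: sum0 => s; apply: sum0 => t; apply: sum0 => m'; rewrite HX0 !mul0r.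
Qed.
End F3.

Lemma F1 (Z : 'I_3 -> 'I_3 -> R[i]) (x : 'I_3 -> R[i]) :
  (forall p i' s, \sum_k Z k s * a k p i' + x p * c i' s = 0) ->
  (forall p, x p = 0) /\ (forall k s, Z k s = 0).
Proof.
move=> H.
have HZ : forall k' s, Z k' s = - \sum_p x p * b p k' s.
  move=> k' s.
  have E0 : \sum_p \sum_i' (\sum_k Z k s * a k p i' + x p * c i' s) * A p i' k' = 0.
    by apply: sum0 => p; apply: sum0 => i'; rewrite H mul0r.
  have E1 : \sum_p \sum_i' (\sum_k Z k s * a k p i' + x p * c i' s) * A p i' k'
     = \sum_k Z k s * (\sum_p \sum_i' a k p i' * A p i' k') + \sum_p x p * (\sum_i' c i' s * A p i' k').
    rewrite !sum3; ring.
  have E2 : \sum_k Z k s * (\sum_p \sum_i' a k p i' * A p i' k') = Z k' s.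
    rewrite -[RHS](sumKr (fun k => Z k s) k'); apply: eq_bigr => k _; by rewrite (ax3 L).
  have E3 : \sum_p x p * (\sum_i' c i' s * A p i' k') = \sum_p x p * b p k' s.
    apply: eq_bigr => p _; by rewrite (ax9 L).
  apply/eqP; rewrite -subr_eq0 opprK -E2 -E3 -E1 E0 //.
have Hx : forall p, x p = 0.
  move=> p.
  have E0 : \sum_i' \sum_s (\sum_k Z k s * a k p i' + x p * c i' s) * D i' s = 0.
    by apply: sum0 => i'; apply: sum0 => s; rewrite H mul0r.
  have E1 : \sum_i' \sum_s (\sum_k Z k s * a k p i' + x p * c i' s) * D i' s
     = \sum_k \sum_s Z k s * (\sum_i' a k p i' * D i' s) + x p * (\sum_i' \sum_s D i' s * c i' s).
    rewrite !sum3; ring.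
  have E2 : \sum_k \sum_s Z k s * (\sum_i' a k p i' * D i' s)
          = - \sum_p' x p' * (\sum_k \sum_s b p' k s * B k s p).
    transitivity (\sum_k \sum_s (- \sum_p' x p' * b p' k s) * B k s p).
      apply: eq_bigr => k _; apply: eq_bigr => s _; by rewrite (ax6 L) HZ.
    rewrite !sum3; ring.
  have E3 : \sum_p' x p' * (\sum_k \sum_s b p' k s * B k s p) = x p.
    rewrite -[RHS](sumKr x p); apply: eq_bigr => p' _; by rewrite Bb.
  move: E0; rewrite E1 E2 E3 (ax10 L) => E.
  have : x p * (kap - 1) = 0 by rewrite -E; ring.
  move/eqP; rewrite mulf_eq0 subr_eq0 (negbTE (kap_neq1 L)) orbF => /eqP; done.
split => // k s; rewrite HZ; apply/eqP; rewrite oppr_eq0; apply/eqP.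
by apply: sum0 => p; rewrite Hx mul0r.
Qed.

Lemma F2 (y : 'I_3 -> R[i]) (Z : 'I_3 -> 'I_3 -> R[i]) :
  (forall p s t, y t * c p s + \sum_m Z p m * b m s t = 0) ->
  (forall t, y t = 0) /\ (forall p m, Z p m = 0).
Proof.
move=> H.
have HZ : forall p m', Z p m' = - (w * \sum_t y t * a t p m').
  move=> p m'.
  have E0 : \sum_s \sum_t (y t * c p s + \sum_m Z p m * b m s t) * B s t m' = 0.
    by apply: sum0 => s; apply: sum0 => t; rewrite H mul0r.
  have E1 : \sum_s \sum_t (y t * c p s + \sum_m Z p m * b m s t) * B s t m'
     = \sum_t y t * (\sum_s c p s * B s t m') + \sum_m Z p m * (\sum_s \sum_t b m s t * B s t m').
    rewrite !sum3; ring.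
  have E2 : \sum_m Z p m * (\sum_s \sum_t b m s t * B s t m') = Z p m'.
    rewrite -[RHS](sumKr (Z p) m'); apply: eq_bigr => m _; by rewrite Bb.
  have E3 : \sum_t y t * (\sum_s c p s * B s t m') = w * \sum_t y t * a t p m'.
    transitivity (\sum_t y t * (w * a t p m')).
      apply: eq_bigr => t _; by rewrite cB.
    rewrite !sum3; ring.
  apply/eqP; rewrite -subr_eq0 opprK addrC -E2 -E3 -E1 E0 //.
have Hy : forall t, y t = 0.
  move=> t.
  have E0 : \sum_p \sum_s (y t * c p s + \sum_m Z p m * b m s t) * D p s = 0.
    by apply: sum0 => p; apply: sum0 => s; rewrite H mul0r.
  have E1 : \sum_p \sum_s (y t * c p s + \sum_m Z p m * b m s t) * D p s
     = y t * (\sum_p \sum_s D p s * c p s) + \sum_p \sum_m Z p m * (\sum_s D p s * b m s t).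
    rewrite !sum3; ring.
  have E2 : \sum_p \sum_m Z p m * (\sum_s D p s * b m s t)
          = - (w ^+ 3 * \sum_t' y t' * (\sum_p \sum_m a t' p m * A p m t)).
    transitivity (\sum_p \sum_m (- (w * \sum_t' y t' * a t' p m)) * (w ^+ 2 * A p m t)).
      apply: eq_bigr => p' _; apply: eq_bigr => m _; by rewrite DbA HZ.
    rewrite !sum3; ring.
  have E3 : \sum_t' y t' * (\sum_p \sum_m a t' p m * A p m t) = y t.
    rewrite -[RHS](sumKr y t); apply: eq_bigr => t' _; by rewrite (ax3 L).
  move: E0; rewrite E1 E2 E3 (ax10 L) om3' mul1r => E.
  have : y t * (kap - 1) = 0 by rewrite -E; ring.
  move/eqP; rewrite mulf_eq0 subr_eq0 (negbTE (kap_neq1 L)) orbF => /eqP; done.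
split => // p m; rewrite HZ; apply/eqP; rewrite oppr_eq0 mulf_eq0; apply/orP; right; apply/eqP.
by apply: sum0 => t; rewrite Hy mul0r.
Qed.

End Crux.


Section Gens2.
Variables (R : realType) (L : BQD R).
Local Notation A := (tA L). Local Notation a := (ta L).
Local Notation B := (tB L). Local Notation b := (tb L).
Local Notation C := (tC L). Local Notation c := (tc L).
Local Notation D := (tD L). Local Notation d := (td L).
Local Notation w := (om L).
Local Notation q := (q L).
Local Notation G := (Gco L).

Lemma sz2_a k : sz2 (gen_a L k).
Proof. move=> u; case: u => [|[x|x] [|[y|y] [|z u]]] //=. Qed.
Lemma sz2_b k : sz2 (gen_b L k).
Proof. move=> u; case: u => [|[x|x] [|[y|y] [|z u]]] //=. Qed.
Lemma sz2_c : sz2 (gen_c L).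
Proof. move=> u; case: u => [|[x|x] [|[y|y] [|z u]]] //=. Qed.
Lemma sz2_r l m : sz2 (gen_rel L l m).
Proof. move=> u; case: u => [|[x|x] [|[y|y] [|z u]]] //=. Qed.

Lemma sz2_gen g : is_gen L g -> sz2 g.
Proof.
case=> [[k ->]|[[m ->]|[->|[l [m ->]]]]]; [exact: sz2_a|exact: sz2_b|exact: sz2_c|exact: sz2_r].
Qed.

Lemma homog_a k : homog 2 0 (gen_a L k).
Proof. move=> u; case: u => [|[x|x] [|[y|y] [|z u]]] //=; by rewrite eqxx. Qed.
Lemma homog_b k : homog 0 2 (gen_b L k).
Proof. move=> u; case: u => [|[x|x] [|[y|y] [|z u]]] //=; by rewrite eqxx. Qed.
Lemma homog_c : homog 1 1 (gen_c L).
Proof. move=> u; case: u => [|[x|x] [|[y|y] [|z u]]] //=; by rewrite eqxx. Qed.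
Lemma homog_r l m : homog 1 1 (gen_rel L l m).
Proof. move=> u; case: u => [|[x|x] [|[y|y] [|z u]]] //=; by rewrite eqxx. Qed.

Lemma L3a k lt x y z : L3 (gen_a L k) lt [:: x; y; z] = gen_a L k [:: x; y] * (z == lt)%:R.
Proof. exact: L3E (sz2_a k). Qed.
Lemma R3a k lt x y z : R3 lt (gen_a L k) [:: x; y; z] = (x == lt)%:R * gen_a L k [:: y; z].
Proof. exact: R3E (sz2_a k). Qed.
Lemma L3b k lt x y z : L3 (gen_b L k) lt [:: x; y; z] = gen_b L k [:: x; y] * (z == lt)%:R.
Proof. exact: L3E (sz2_b k). Qed.
Lemma R3b k lt x y z : R3 lt (gen_b L k) [:: x; y; z] = (x == lt)%:R * gen_b L k [:: y; z].
Proof. exact: R3E (sz2_b k). Qed.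
Lemma L3c lt x y z : L3 (gen_c L) lt [:: x; y; z] = gen_c L [:: x; y] * (z == lt)%:R.
Proof. exact: L3E sz2_c. Qed.
Lemma R3c lt x y z : R3 lt (gen_c L) [:: x; y; z] = (x == lt)%:R * gen_c L [:: y; z].
Proof. exact: R3E sz2_c. Qed.
Lemma L3r l m lt x y z : L3 (gen_rel L l m) lt [:: x; y; z] = gen_rel L l m [:: x; y] * (z == lt)%:R.
Proof. exact: L3E (sz2_r l m). Qed.
Lemma R3r l m lt x y z : R3 lt (gen_rel L l m) [:: x; y; z] = (x == lt)%:R * gen_rel L l m [:: y; z].
Proof. exact: R3E (sz2_r l m). Qed.

Lemma inI_L3 g lt : is_gen L g -> in_I L (L3 g lt).
Proof. move=> Hg; apply: in_Igen => //; exact: fin_supp_delta. Qed.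
Lemma inI_R3 g lt : is_gen L g -> in_I L (R3 lt g).
Proof. move=> Hg; apply: in_Igen => //; exact: fin_supp_delta. Qed.

Lemma isg_a k : is_gen L (gen_a L k). Proof. by left; exists k. Qed.
Lemma isg_b k : is_gen L (gen_b L k). Proof. by right; left; exists k. Qed.
Lemma isg_c : is_gen L (gen_c L). Proof. by right; right; left. Qed.
Lemma isg_r l m : is_gen L (gen_rel L l m). Proof. by right; right; right; exists l, m. Qed.

End Gens2.

Section SpanTools.
Variables (R : realType) (T : finType) (S : pred T) (fam : T -> tens R).

Lemma word3 k l (u : seq letter) : (k + l = 3)%N -> count isV u = k -> count isW u = l ->
  exists x y z, u = [:: x; y; z].
Proof.
move=> Hkl e1 e2; have : size u = 3 by rewrite -countVW e1 e2.
by case: u {e1 e2} => [|x [|y [|z [|t u]]]] // _; exists x, y, z.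
Qed.

Lemma span_res k l h (E : tens R) : spanP S fam E -> (forall t, t \in S -> homog k l (fam t)) ->
  (forall u, count isV u = k -> count isW u = l -> h u = E u) -> spanP S fam (res k l h).
Proof.
move=> [cf HE] Hf Hh; exists cf => u; rewrite /res; case: ifP => [/andP[/eqP e1 /eqP e2]|H].
  by rewrite Hh // HE.
rewrite big1 // => t tS; case: (fam t u =P 0) => [->|/eqP Hn]; first by rewrite mulr0.
by have [e1 e2] := Hf t tS u Hn; rewrite e1 e2 !eqxx in H.
Qed.

Lemma res0_L3 k l kg lg g lt : homog kg lg g -> (k != kg + isV lt)%N || (l != lg + isW lt)%N ->
  spanP S fam (res k l (L3 g lt)).
Proof.
move=> Hg Hn; apply: span_ext (span0 S fam) _ => u; symmetry; exact: res_0 (homog_L3 (lt:=lt) Hg) Hn u.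
Qed.
Lemma res0_R3 k l kg lg g lt : homog kg lg g -> (k != isV lt + kg)%N || (l != isW lt + lg)%N ->
  spanP S fam (res k l (R3 lt g)).
Proof.
move=> Hg Hn; apply: span_ext (span0 S fam) _ => u; symmetry; exact: res_0 (homog_R3 (lt:=lt) Hg) Hn u.
Qed.
Lemma resid_L3 k l kg lg g lt : homog kg lg g -> k = (kg + isV lt)%N -> l = (lg + isW lt)%N ->
  spanP S fam (L3 g lt) -> spanP S fam (res k l (L3 g lt)).
Proof.
move=> Hg -> -> Hs; apply: span_ext Hs _ => u; symmetry; exact: res_id (homog_L3 (lt:=lt) Hg) u.
Qed.
Lemma resid_R3 k l kg lg g lt : homog kg lg g -> k = (isV lt + kg)%N -> l = (isW lt + lg)%N ->
  spanP S fam (R3 lt g) -> spanP S fam (res k l (R3 lt g)).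
Proof.
move=> Hg -> -> Hs; apply: span_ext Hs _ => u; symmetry; exact: res_id (homog_R3 (lt:=lt) Hg) u.
Qed.

End SpanTools.

Lemma sum_skip (R : realType) (F : 'I_3 -> 'I_3 -> R[i]) i0 k0 :
  \sum_i \sum_k (if (i, k) == (i0, k0) then 0 else F i k) = \sum_i \sum_k F i k - F i0 k0.
Proof.
rewrite !pair_bigA /= (bigD1 (i0, k0)) //= eqxx add0r.
rewrite [X in _ = X - _](bigD1 (i0, k0)) //= addrC addrK.
apply: eq_bigr => -[i k] /negbTE H; by rewrite H.
Qed.

Lemma sumT2 (R : realType) (F : ('I_3 * 'I_3) + ('I_3 * 'I_3) -> R[i]) :
  \sum_t F t = \sum_i \sum_j F (inl (i, j)) + \sum_i \sum_j F (inr (i, j)).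
Proof. by rewrite big_sumType !pair_bigA; congr (_ + _); apply: eq_bigr => -[i j]. Qed.


Ltac z0 := solve [ apply: res0_L3; [ first [exact: homog_a | exact: homog_b | exact: homog_c | exact: homog_r] | by [] ]
                 | apply: res0_R3; [ first [exact: homog_a | exact: homog_b | exact: homog_c | exact: homog_r] | by [] ] ].

Section D30.
Variables (R : realType) (L : BQD R).
Local Notation A := (tA L). Local Notation a := (ta L).
Local Notation B := (tB L). Local Notation b := (tb L).
Local Notation C := (tC L). Local Notation c := (tc L).
Local Notation D := (tD L). Local Notation d := (td L).
Local Notation w := (om L).
Variable k0 : 'I_3.
Hypothesis Hc : c i0 k0 != 0.

Definition T30 := (('I_3 * 'I_3) + ('I_3 * 'I_3))%type.
Definition fam30 (t : T30) : tens R :=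
  match t with inl (k, i) => L3 (gen_a L k) (inl i) | inr (i, k) => R3 (inl i) (gen_a L k) end.
Definition S30 : pred T30 := predC1 (inr (i0, k0)).

Lemma card30 : #|S30| = 17%N.
Proof. by rewrite cardC1 card_sum !card_prod !card_ord. Qed.

Lemma fam30_I t : t \in S30 -> I_comp L 3%N 0%N (fam30 t).
Proof.
move=> _; case: t => [[k i]|[i k]]; split.
- exact: inI_L3 (isg_a L k).
- exact: (homog_L3 (lt := inl i) (homog_a (L:=L) (k:=k))).
- exact: inI_R3 (isg_a L k).
- exact: (homog_R3 (lt := inl i) (homog_a (L:=L) (k:=k))).
Qed.

Lemma val30l k i p r s : fam30 (inl (k, i)) [:: inl p; inl r; inl s] = a k p r * kron s i.
Proof. by rewrite /= L3a. Qed.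
Lemma val30r i k p r s : fam30 (inr (i, k)) [:: inl p; inl r; inl s] = kron p i * a k r s.
Proof. by rewrite /= R3a. Qed.

Lemma ind30 (cf : T30 -> R[i]) : (forall u, \sum_(t in S30) cf t * fam30 t u = 0) ->
  forall t, t \in S30 -> cf t = 0.
Proof.
move=> Hcf t Ht.
pose cf' := fun t => if t == inr (i0, k0) then 0 else cf t.
have H' : forall u, \sum_t cf' t * fam30 t u = 0.
  move=> u; rewrite -[RHS](Hcf u) [RHS]big_mkcond; apply: eq_bigr => t' _.
  rewrite /cf' inE; case: eqP => //= _; by rewrite mul0r.
pose X p k := cf' (inr (p, k)); pose Y k i := cf' (inl (k, i)).
have HF : forall p r s, \sum_k Y k s * a k p r + \sum_k X p k * a k r s = 0.
  move=> p r s; rewrite -[RHS](H' [:: inl p; inl r; inl s]) sumT2; congr (_ + _).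
    apply: eq_bigr => k _; rewrite -(sumKr' (fun i => Y k i * a k p r) s).
    apply: eq_bigr => i _; rewrite val30l /Y; ring.
  transitivity (\sum_i kron p i * \sum_k X i k * a k r s); first by rewrite sumKl.
  apply: eq_bigr => i _; rewrite mulr_sumr; apply: eq_bigr => k _; rewrite val30r /X; ring.
have HX0 : X i0 k0 = 0 by rewrite /X /cf' eqxx.
have [HX HY] := F0 HF Hc HX0.
move: Ht; case: t => [[k i]|[i k]] Ht.
  by have := HY k i; rewrite /Y /cf'.
have := HX i k; rewrite /X /cf'. by rewrite inE in Ht; rewrite (negbTE Ht).
Qed.

Lemma extra30 : spanP S30 fam30 (res 3%N 0%N (R3 (inl i0) (gen_a L k0))).
Proof.
have E1 : spanP S30 fam30 (fun u => \sum_k \sum_i d k i * fam30 (inl (k, i)) u).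
  apply: span_ext (span_sum (fun k => span_sum (fun i => spanZ (d k i) (@span_fam _ _ S30 fam30 (inl (k, i)) isT)))) _.
  by [].
have E2 : spanP S30 fam30 (fun u => \sum_i \sum_k (if (i, k) == (i0, k0) then 0 else c i k * fam30 (inr (i, k)) u)).
  apply: span_sum => i; apply: span_sum => k.
  case: eqP => [_|Hne]; first exact: span0.
  apply: spanZ; apply: span_fam; rewrite inE; apply/eqP => -[e1 e2]; by apply: Hne; rewrite e1 e2.
apply: (span_res (spanZ (c i0 k0)^-1 (spanB (spanZ w E1) E2))).
  by move=> t /fam30_I [].
move=> u e1 e2; have [x [y [z Eu]]] := word3 (erefl : (3 + 0 = 3)%N) e1 e2.
move: e1 e2; rewrite Eu; case: x y z {Eu} => [p|p] [r|r] [s|s] //= e1 e2.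
rewrite sum_skip R3a /=.
have T1 : \sum_k \sum_i d k i * fam30 (inl (k, i)) [:: inl p; inl r; inl s] = \sum_k d k s * a k p r.
  apply: eq_bigr => k _; rewrite -(sumKr' (fun i => d k i * a k p r) s).
  apply: eq_bigr => i _; rewrite val30l; ring.
have T2 : \sum_i \sum_k c i k * fam30 (inr (i, k)) [:: inl p; inl r; inl s] = \sum_k c p k * a k r s.
  transitivity (\sum_i kron p i * \sum_k c i k * a k r s); last by rewrite sumKl.
  apply: eq_bigr => i _; rewrite mulr_sumr; apply: eq_bigr => k _; rewrite val30r; ring.
rewrite T1 T2 (ax5 L).
field; exact: Hc.
Qed.

Lemma span30 g : is_gen L g -> forall lt,
  spanP S30 fam30 (res 3%N 0%N (L3 g lt)) /\ spanP S30 fam30 (res 3%N 0%N (R3 lt g)).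
Proof.
case=> [[k ->]|[[m ->]|[->|[l [m ->]]]]] [i|j]; split; try z0.
- apply: (resid_L3 (homog_a (L:=L) (k:=k))) => //. exact: (@span_fam _ _ S30 fam30 (inl (k, i))).
- case: (boolP ((i, k) == (i0, k0))) => [/eqP [-> ->]|Hne]; first exact: extra30.
  apply: (resid_R3 (homog_a (L:=L) (k:=k))) => //. apply: (@span_fam _ _ S30 fam30 (inr (i, k))).
  rewrite inE; apply/eqP => -[e1 e2]; move/eqP: Hne; by apply; rewrite e1 e2.
Qed.

Lemma dim30_k0 : has_dim (I_comp L 3%N 0%N) 17%N.
Proof.
apply: (has_dim_gen (S := S30) (fam := fam30)) => //.
- exact: card30.
- exact: sz2_gen.
- exact: fam30_I.
- exact: ind30.
- exact: span30.
Qed.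

End D30.

Lemma dim30 (R : realType) (L : BQD R) : has_dim (I_comp L 3%N 0%N) 17%N.
Proof.
case: (pickP (fun k => tc L i0 k != 0)) => [k0 H|H]; first exact: (dim30_k0 H).
exfalso; have := ax1 L i0 i0; rewrite kron_ii big1 => [/eqP|k _]; first by rewrite eq_sym oner_eq0.
by move/negbFE: (H k) => /eqP ->; rewrite mul0r.
Qed.

Section D03.
Variables (R : realType) (L : BQD R).
Local Notation A := (tA L). Local Notation a := (ta L).
Local Notation B := (tB L). Local Notation b := (tb L).
Local Notation C := (tC L). Local Notation c := (tc L).
Local Notation D := (tD L). Local Notation d := (td L).
Local Notation w := (om L).
Variables j0 m0 : 'I_3.
Hypothesis Hd : d j0 m0 != 0.

Definition fam03 (t : T30) : tens R :=
  match t with inl (m, j) => L3 (gen_b L m) (inr j) | inr (j, m) => R3 (inr j) (gen_b L m) end.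
Definition S03 : pred T30 := predC1 (inr (j0, m0)).

Lemma card03 : #|S03| = 17%N.
Proof. by rewrite cardC1 card_sum !card_prod !card_ord. Qed.

Lemma fam03_I t : t \in S03 -> I_comp L 0%N 3%N (fam03 t).
Proof.
move=> _; case: t => [[m j]|[j m]]; split.
- exact: inI_L3 (isg_b L m).
- exact: (homog_L3 (lt := inr j) (homog_b (L:=L) (k:=m))).
- exact: inI_R3 (isg_b L m).
- exact: (homog_R3 (lt := inr j) (homog_b (L:=L) (k:=m))).
Qed.

Lemma val03l m j s t u : fam03 (inl (m, j)) [:: inr s; inr t; inr u] = b m s t * kron u j.
Proof. by rewrite /= L3b. Qed.
Lemma val03r j m s t u : fam03 (inr (j, m)) [:: inr s; inr t; inr u] = kron s j * b m t u.
Proof. by rewrite /= R3b. Qed.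

Lemma ind03 (cf : T30 -> R[i]) : (forall u, \sum_(t in S03) cf t * fam03 t u = 0) ->
  forall t, t \in S03 -> cf t = 0.
Proof.
move=> Hcf t0 Ht.
pose cf' := fun t => if t == inr (j0, m0) then 0 else cf t.
have H' : forall u, \sum_t cf' t * fam03 t u = 0.
  move=> u; rewrite -[RHS](Hcf u) [RHS]big_mkcond; apply: eq_bigr => t' _.
  rewrite /cf' inE; case: eqP => //= _; by rewrite mul0r.
pose X s m := cf' (inr (s, m)); pose Y m u := cf' (inl (m, u)).
have HF : forall s t u, \sum_m X s m * b m t u + \sum_m Y m u * b m s t = 0.
  move=> s t u; rewrite addrC -[RHS](H' [:: inr s; inr t; inr u]) sumT2; congr (_ + _).
    apply: eq_bigr => m _; rewrite -(sumKr' (fun j => Y m j * b m s t) u).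
    apply: eq_bigr => j _; rewrite val03l /Y; ring.
  transitivity (\sum_j kron s j * \sum_m X j m * b m t u); first by rewrite sumKl.
  apply: eq_bigr => j _; rewrite mulr_sumr; apply: eq_bigr => m _; rewrite val03r /X; ring.
have HX0 : X j0 m0 = 0 by rewrite /X /cf' eqxx.
have [HX HY] := F3 HF Hd HX0.
move: Ht; case: t0 => [[m j]|[j m]] Ht.
  by have := HY m j; rewrite /Y /cf'.
have := HX j m; rewrite /X /cf'. by rewrite inE in Ht; rewrite (negbTE Ht).
Qed.

Lemma extra03 : spanP S03 fam03 (res 0%N 3%N (R3 (inr j0) (gen_b L m0))).
Proof.
have E1 : spanP S03 fam03 (fun u => \sum_m \sum_j c m j * fam03 (inl (m, j)) u).
  apply: span_ext (span_sum (fun m => span_sum (fun j => spanZ (c m j) (@span_fam _ _ S03 fam03 (inl (m, j)) isT)))) _.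
  by [].
have E2 : spanP S03 fam03 (fun u => \sum_j \sum_m (if (j, m) == (j0, m0) then 0 else d j m * fam03 (inr (j, m)) u)).
  apply: span_sum => j; apply: span_sum => m.
  case: eqP => [_|Hne]; first exact: span0.
  apply: spanZ; apply: span_fam; rewrite inE; apply/eqP => -[e1 e2]; by apply: Hne; rewrite e1 e2.
apply: (span_res (spanZ (d j0 m0)^-1 (spanB (spanZ w E1) E2))).
  by move=> t /fam03_I [].
move=> u e1 e2; have [x [y [z Eu]]] := word3 (erefl : (0 + 3 = 3)%N) e1 e2.
move: e1 e2; rewrite Eu; case: x y z {Eu} => [s|s] [r|r] [v|v] //= e1 e2.
rewrite sum_skip R3b /=.
have T1 : \sum_m \sum_j c m j * fam03 (inl (m, j)) [:: inr s; inr r; inr v] = \sum_m c m v * b m s r.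
  apply: eq_bigr => m _; rewrite -(sumKr' (fun j => c m j * b m s r) v).
  apply: eq_bigr => j _; rewrite val03l; ring.
have T2 : \sum_j \sum_m d j m * fam03 (inr (j, m)) [:: inr s; inr r; inr v] = \sum_m d s m * b m r v.
  transitivity (\sum_j kron s j * \sum_m d j m * b m r v); last by rewrite sumKl.
  apply: eq_bigr => j _; rewrite mulr_sumr; apply: eq_bigr => m _; rewrite val03r; ring.
rewrite T1 T2 -(K3 L).
field; exact: Hd.
Qed.

Lemma span03 g : is_gen L g -> forall lt,
  spanP S03 fam03 (res 0%N 3%N (L3 g lt)) /\ spanP S03 fam03 (res 0%N 3%N (R3 lt g)).
Proof.
case=> [[k ->]|[[m ->]|[->|[l [m ->]]]]] [i|j]; split; try z0.
- apply: (resid_L3 (homog_b (L:=L) (k:=m))) => //. exact: (@span_fam _ _ S03 fam03 (inl (m, j))).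
- case: (boolP ((j, m) == (j0, m0))) => [/eqP [-> ->]|Hne]; first exact: extra03.
  apply: (resid_R3 (homog_b (L:=L) (k:=m))) => //. apply: (@span_fam _ _ S03 fam03 (inr (j, m))).
  rewrite inE; apply/eqP => -[e1 e2]; move/eqP: Hne; by apply; rewrite e1 e2.
Qed.

Lemma dim03_j0 : has_dim (I_comp L 0%N 3%N) 17%N.
Proof.
apply: (has_dim_gen (S := S03) (fam := fam03)) => //.
- exact: card03.
- exact: sz2_gen.
- exact: fam03_I.
- exact: ind03.
- exact: span03.
Qed.

End D03.

Lemma dim03 (R : realType) (L : BQD R) : has_dim (I_comp L 0%N 3%N) 17%N.
Proof.
case: (pickP (fun k => td L k i0 != 0)) => [j0 H|H]; first exact: (dim03_j0 H).
exfalso; have := ax2 L i0 i0; rewrite kron_ii big1 => [/eqP|k _]; first by rewrite eq_sym oner_eq0.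
by move/negbFE: (H k) => /eqP ->; rewrite mulr0.
Qed.


Definition T4 := (((('I_3 * 'I_3 * 'I_3) + ('I_3 * 'I_3 * 'I_3)) + ('I_3 * 'I_3)) + 'I_3)%type.

Lemma sum_triple (R : realType) (F : 'I_3 * 'I_3 * 'I_3 -> R[i]) :
  \sum_x F x = \sum_l \sum_m \sum_n F (l, m, n).
Proof.
rewrite pair_bigA pair_bigA /=; apply: eq_bigr => -[[l m] n] //.
Qed.

Lemma sum_pair (R : realType) (F : 'I_3 * 'I_3 -> R[i]) :
  \sum_x F x = \sum_l \sum_m F (l, m).
Proof. rewrite pair_bigA /=; apply: eq_bigr => -[l m] //. Qed.

Lemma sumT4 (R : realType) (F : T4 -> R[i]) :
  \sum_t F t = \sum_l \sum_m \sum_n F (inl (inl (inl (l, m, n))))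
             + \sum_l \sum_m \sum_n F (inl (inl (inr (l, m, n))))
             + \sum_k \sum_j F (inl (inr (k, j))) + \sum_i F (inr i).
Proof. by rewrite !big_sumType !sum_triple sum_pair. Qed.

Lemma cardT4 : #|(predT : pred T4)| = 66%N.
Proof. by rewrite cardE -cardT !card_sum !card_prod !card_ord. Qed.

Ltac evv := rewrite /= ?L3r ?R3r ?L3a ?R3a ?L3b ?R3b ?L3c ?R3c /= ?(mul0r, mulr0) //.

Section D21.
Variables (R : realType) (L : BQD R).
Local Notation A := (tA L). Local Notation a := (ta L).
Local Notation B := (tB L). Local Notation b := (tb L).
Local Notation C := (tC L). Local Notation c := (tc L).
Local Notation D := (tD L). Local Notation d := (td L).
Local Notation w := (om L).
Local Notation q := (q L).
Local Notation G := (Gco L).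
Local Notation s := (q + q^-1).
Local Notation rho := (((q + q^-1) ^+ 2)^-1).

Definition fam21 (t : T4) : tens R :=
  match t with
  | inl (inl (inl (l, m, n))) => L3 (gen_rel L l m) (inl n)
  | inl (inl (inr (i, l, m))) => R3 (inl i) (gen_rel L l m)
  | inl (inr (k, j)) => L3 (gen_a L k) (inr j)
  | inr i => R3 (inl i) (gen_c L)
  end.
Definition S21 : pred T4 := predT.

Definition blk1 (F : 'I_3 -> 'I_3 -> 'I_3 -> R[i]) (u : seq letter) :=
  \sum_l \sum_m \sum_n F l m n * fam21 (inl (inl (inl (l, m, n)))) u.
Definition blk2 (F : 'I_3 -> 'I_3 -> 'I_3 -> R[i]) (u : seq letter) :=
  \sum_l \sum_m \sum_n F l m n * fam21 (inl (inl (inr (l, m, n)))) u.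
Definition blk3 (F : 'I_3 -> 'I_3 -> R[i]) (u : seq letter) :=
  \sum_k \sum_j F k j * fam21 (inl (inr (k, j))) u.
Definition blk4 (F : 'I_3 -> R[i]) (u : seq letter) :=
  \sum_i F i * fam21 (inr i) u.

Lemma span21_1 F : spanP S21 fam21 (blk1 F).
Proof.
apply: span_ext (span_sum (fun l => span_sum (fun m => span_sum (fun n =>
  spanZ (F l m n) (@span_fam _ _ S21 fam21 (inl (inl (inl (l, m, n)))) isT))))) _.
by [].
Qed.
Lemma span21_2 F : spanP S21 fam21 (blk2 F).
Proof.
apply: span_ext (span_sum (fun l => span_sum (fun m => span_sum (fun n =>
  spanZ (F l m n) (@span_fam _ _ S21 fam21 (inl (inl (inr (l, m, n)))) isT))))) _.
by [].
Qed.
Lemma span21_3 F : spanP S21 fam21 (blk3 F).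
Proof.
apply: span_ext (span_sum (fun k => span_sum (fun j =>
  spanZ (F k j) (@span_fam _ _ S21 fam21 (inl (inr (k, j))) isT)))) _.
by [].
Qed.
Lemma span21_4 F : spanP S21 fam21 (blk4 F).
Proof.
apply: span_ext (span_sum (fun i =>
  spanZ (F i) (@span_fam _ _ S21 fam21 (inr i) isT))) _.
by [].
Qed.

Lemma sum21 (cf : T4 -> R[i]) u : \sum_t cf t * fam21 t u =
  blk1 (fun l m n => cf (inl (inl (inl (l, m, n))))) u +
  blk2 (fun l m n => cf (inl (inl (inr (l, m, n))))) u +
  blk3 (fun k j => cf (inl (inr (k, j)))) u + blk4 (fun i => cf (inr i)) u.
Proof. by rewrite sumT4. Qed.

Lemma v1a l m n l' m' n' : fam21 (inl (inl (inl (l', m', n')))) [:: inr l; inl m; inl n]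
  = kron l l' * kron m m' * kron n n'.
Proof. by evv. Qed.
Lemma v1b l m n p s' n' : fam21 (inl (inl (inl (l, m, n)))) [:: inl p; inr s'; inl n']
  = s * G l m p s' * kron n' n.
Proof. by evv. Qed.
Lemma v1c l m n p p2 s2 : fam21 (inl (inl (inl (l, m, n)))) [:: inl p; inl p2; inr s2] = 0.
Proof. by evv. Qed.
Lemma v2a i l m l' m' n' : fam21 (inl (inl (inr (i, l, m)))) [:: inr l'; inl m'; inl n'] = 0.
Proof. by evv. Qed.
Lemma v2b i l m p s' n' : fam21 (inl (inl (inr (i, l, m)))) [:: inl p; inr s'; inl n']
  = kron p i * (kron s' l * kron n' m).
Proof. by evv. Qed.
Lemma v2c i l m p p2 s2 : fam21 (inl (inl (inr (i, l, m)))) [:: inl p; inl p2; inr s2]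
  = kron p i * (s * G l m p2 s2).
Proof. by evv. Qed.
Lemma v3a k j l' m' n' : fam21 (inl (inr (k, j))) [:: inr l'; inl m'; inl n'] = 0.
Proof. by evv. Qed.
Lemma v3b k j p s' n' : fam21 (inl (inr (k, j))) [:: inl p; inr s'; inl n'] = 0.
Proof. by evv. Qed.
Lemma v3c k j p p2 s2 : fam21 (inl (inr (k, j))) [:: inl p; inl p2; inr s2] = a k p p2 * kron s2 j.
Proof. by evv. Qed.
Lemma v4a i l' m' n' : fam21 (inr i) [:: inr l'; inl m'; inl n'] = 0.
Proof. by evv. Qed.
Lemma v4b i p s' n' : fam21 (inr i) [:: inl p; inr s'; inl n'] = 0.
Proof. by evv. Qed.
Lemma v4c i p p2 s2 : fam21 (inr i) [:: inl p; inl p2; inr s2] = kron p i * c p2 s2.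
Proof. by evv. Qed.

Lemma b1a F l m n : blk1 F [:: inr l; inl m; inl n] = F l m n.
Proof.
transitivity (\sum_l' kron l l' * (\sum_m' kron m m' * (\sum_n' kron n n' * F l' m' n'))).
  rewrite /blk1 !sum3 !v1a; ring.
by rewrite sumKl sumKl sumKl.
Qed.
Lemma b1b F p s' n : blk1 F [:: inl p; inr s'; inl n] = s * \sum_l \sum_m F l m n * G l m p s'.
Proof.
transitivity (s * \sum_n' kron n n' * (\sum_l \sum_m F l m n' * G l m p s')).
  rewrite /blk1 !sum3 !v1b; ring.
by rewrite sumKl.
Qed.
Lemma b1c F p p2 s2 : blk1 F [:: inl p; inl p2; inr s2] = 0.
Proof. by apply: sum0 => ?; apply: sum0 => ?; apply: sum0 => ?; rewrite v1c mulr0. Qed.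
Lemma b2a F l m n : blk2 F [:: inr l; inl m; inl n] = 0.
Proof. by apply: sum0 => ?; apply: sum0 => ?; apply: sum0 => ?; rewrite v2a mulr0. Qed.
Lemma b2b F p s' n : blk2 F [:: inl p; inr s'; inl n] = F p s' n.
Proof.
transitivity (\sum_i kron p i * (\sum_l kron s' l * (\sum_m kron n m * F i l m))).
  rewrite /blk2 !sum3 !v2b; ring.
by rewrite sumKl sumKl sumKl.
Qed.
Lemma b2c F p p2 s2 : blk2 F [:: inl p; inl p2; inr s2] = s * \sum_l \sum_m F p l m * G l m p2 s2.
Proof.
transitivity (s * \sum_i kron p i * (\sum_l \sum_m F i l m * G l m p2 s2)).
  rewrite /blk2 !sum3 !v2c; ring.
by rewrite sumKl.
Qed.
Lemma b3a F l m n : blk3 F [:: inr l; inl m; inl n] = 0.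
Proof. by apply: sum0 => ?; apply: sum0 => ?; rewrite v3a mulr0. Qed.
Lemma b3b F p s' n : blk3 F [:: inl p; inr s'; inl n] = 0.
Proof. by apply: sum0 => ?; apply: sum0 => ?; rewrite v3b mulr0. Qed.
Lemma b3c F p p2 s2 : blk3 F [:: inl p; inl p2; inr s2] = \sum_k F k s2 * a k p p2.
Proof.
transitivity (\sum_k \sum_j kron s2 j * (F k j * a k p p2)).
  rewrite /blk3 !sum3 !v3c; ring.
by apply: eq_bigr => k _; rewrite sumKl.
Qed.
Lemma b4a F l m n : blk4 F [:: inr l; inl m; inl n] = 0.
Proof. by apply: sum0 => ?; rewrite v4a mulr0. Qed.
Lemma b4b F p s' n : blk4 F [:: inl p; inr s'; inl n] = 0.
Proof. by apply: sum0 => ?; rewrite v4b mulr0. Qed.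
Lemma b4c F p p2 s2 : blk4 F [:: inl p; inl p2; inr s2] = F p * c p2 s2.
Proof.
transitivity (\sum_i kron p i * (F i * c p2 s2)).
  rewrite /blk4 !sum3 !v4c; ring.
by rewrite sumKl.
Qed.

Lemma fam21_I t : t \in S21 -> I_comp L 2%N 1%N (fam21 t).
Proof.
move=> _; case: t => [[[[[l m] n]|[[i l] m]]|[k j]]|i]; split.
- exact: inI_L3 (isg_r L l m).
- exact: (homog_L3 (lt := inl n) (homog_r (L:=L) (l:=l) (m:=m))).
- exact: inI_R3 (isg_r L l m).
- exact: (homog_R3 (lt := inl i) (homog_r (L:=L) (l:=l) (m:=m))).
- exact: inI_L3 (isg_a L k).
- exact: (homog_L3 (lt := inr j) (homog_a (L:=L) (k:=k))).
- exact: inI_R3 (isg_c L).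
- exact: (homog_R3 (lt := inl i) (homog_c (L:=L))).
Qed.

Lemma ind21 (cf : T4 -> R[i]) : (forall u, \sum_(t in S21) cf t * fam21 t u = 0) ->
  forall t, t \in S21 -> cf t = 0.
Proof.
move=> Hcf t0 _.
have H' : forall u, blk1 (fun l m n => cf (inl (inl (inl (l, m, n))))) u +
  blk2 (fun l m n => cf (inl (inl (inr (l, m, n))))) u +
  blk3 (fun k j => cf (inl (inr (k, j)))) u + blk4 (fun i => cf (inr i)) u = 0.
  by move=> u; rewrite -sum21 -[RHS](Hcf u); apply: eq_bigl.
have H1 : forall l m n, cf (inl (inl (inl (l, m, n)))) = 0.
  by move=> l m n; have := H' [:: inr l; inl m; inl n]; rewrite b1a b2a b3a b4a !addr0.
have H2 : forall i l m, cf (inl (inl (inr (i, l, m)))) = 0.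
  move=> i l m; have := H' [:: inl i; inr l; inl m]; rewrite b1b b2b b3b b4b !addr0.
  have Z : \sum_l0 \sum_m0 cf (inl (inl (inl (l0, m0, m)))) * G l0 m0 i l = 0.
    by apply: sum0 => ?; apply: sum0 => ?; rewrite H1 mul0r.
  by rewrite Z mulr0 add0r.
have H34 : (forall p, cf (inr p) = 0) /\ (forall k s, cf (inl (inr (k, s))) = 0).
  apply: (@F1 R L) => p i' s'; have := H' [:: inl p; inl i'; inr s']; rewrite b1c b2c b3c b4c add0r.
  have Z : \sum_l0 \sum_m0 cf (inl (inl (inr (p, l0, m0)))) * G l0 m0 i' s' = 0.
    by apply: sum0 => ?; apply: sum0 => ?; rewrite H2 mul0r.
  by rewrite Z mulr0 add0r.
case: H34 => H4 H3.
by case: t0 => [[[[[l m] n]|[[i l] m]]|[k j]]|i].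
Qed.

Lemma s2rho : s ^+ 2 * rho = 1.
Proof. by rewrite divff // expf_neq0 // s_neq0. Qed.

Lemma deg21 (P : seq letter -> Prop) :
  (forall l m n, P [:: inr l; inl m; inl n]) ->
  (forall p s' n, P [:: inl p; inr s'; inl n]) ->
  (forall p p2 s2, P [:: inl p; inl p2; inr s2]) ->
  forall u, count isV u = 2%N -> count isW u = 1%N -> P u.
Proof.
move=> H1 H2 H3 u e1 e2; have [x [y [z Eu]]] := word3 (erefl : (2 + 1 = 3)%N) e1 e2.
by move: e1 e2; rewrite Eu; case: x y z {Eu} => [x|x] [y|y] [z|z] //= e1 e2.
Qed.

Lemma extra21a n : spanP S21 fam21 (res 2%N 1%N (L3 (gen_c L) (inl n))).
Proof.
apply: (span_res (spanB (span21_2 (fun i l m => kron m n * c i l)) (spanZ (s * w ^+ 2) (span21_3 (fun k j => b n k j))))).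
  by move=> t /fam21_I [].
apply: deg21.
- by move=> l m n'; rewrite b2a b3a; evv; rewrite subrr.
- move=> p s' n'; rewrite b2b b3b; evv; rewrite /kron; ring.
- move=> p p2 s2; rewrite b2c b3c; evv.
  have X : \sum_l \sum_m kron m n * c p l * G l m p2 s2 = \sum_l c p l * G l n p2 s2.
    apply: eq_bigr => l _; rewrite -(sumKl' (fun m => c p l * G l m p2 s2) n).
    apply: eq_bigr => m _; ring.
  rewrite X I1; ring.
Qed.

Lemma extra21b j k : spanP S21 fam21 (res 2%N 1%N (R3 (inr j) (gen_a L k))).
Proof.
apply: (span_res (spanD (spanD (spanB (span21_1 (fun l i i' => kron l j * a k i i'))
   (spanZ s (span21_2 (fun p s' i' => \sum_i a k i i' * G j i p s'))))
   (span21_3 (fun k' j' => kron k' j * kron j' k))) (span21_4 (fun i => B j k i)))).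
  by move=> t /fam21_I [].
apply: deg21.
- by move=> l m n; rewrite b1a b2a b3a b4a; evv; rewrite /kron; ring.
- move=> p s' n; rewrite b1b b2b b3b b4b; evv.
  have X : \sum_l \sum_m kron l j * a k m n * G l m p s' = \sum_i a k i n * G j i p s'.
    rewrite -(sumKl' (fun l => \sum_m a k m n * G l m p s') j).
    apply: eq_bigr => l _; rewrite mulr_sumr; apply: eq_bigr => m _; ring.
  rewrite X; ring.
- move=> p p2 s2; rewrite b1c b2c b3c b4c; evv.
  have X : \sum_l \sum_m (\sum_i a k i m * G j i p l) * G l m p2 s2
         = \sum_i \sum_i' \sum_s a k i i' * G j i p s * G s i' p2 s2.
    rewrite !sum3; ring.
  have Y : \sum_k' kron k' j * kron s2 k * a k' p p2 = kron s2 k * a j p p2.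
    rewrite -(sumKl' (fun k' => kron s2 k * a k' p p2) j); apply: eq_bigr => k' _; ring.
  rewrite X I2 Y kronC.
  have E := s2rho.
  symmetry; transitivity (- (s ^+ 2 * rho) * (a j p p2 * kron s2 k + B j k p * c p2 s2) + (kron s2 k * a j p p2 + B j k p * c p2 s2)); first ring.
  rewrite E; ring.
Qed.

Lemma span21 g : is_gen L g -> forall lt,
  spanP S21 fam21 (res 2%N 1%N (L3 g lt)) /\ spanP S21 fam21 (res 2%N 1%N (R3 lt g)).
Proof.
case=> [[k ->]|[[m ->]|[->|[l [m ->]]]]] [i|j]; split; try z0.
- apply: (resid_L3 (homog_a (L:=L) (k:=k))) => //. exact: (@span_fam _ _ S21 fam21 (inl (inr (k, j)))).
- exact: extra21b.
- exact: extra21a.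
- apply: (resid_R3 (homog_c (L:=L))) => //. exact: (@span_fam _ _ S21 fam21 (inr i)).
- apply: (resid_L3 (homog_r (L:=L) (l:=l) (m:=m))) => //. exact: (@span_fam _ _ S21 fam21 (inl (inl (inl (l, m, i))))).
- apply: (resid_R3 (homog_r (L:=L) (l:=l) (m:=m))) => //. exact: (@span_fam _ _ S21 fam21 (inl (inl (inr (i, l, m))))).
Qed.

Lemma dim21 : has_dim (I_comp L 2%N 1%N) 66%N.
Proof.
apply: (has_dim_gen (S := S21) (fam := fam21)) => //.
- exact: cardT4.
- exact: sz2_gen.
- exact: fam21_I.
- exact: ind21.
- exact: span21.
Qed.

End D21.


Section D12.
Variables (R : realType) (L : BQD R).
Local Notation A := (tA L). Local Notation a := (ta L).
Local Notation B := (tB L). Local Notation b := (tb L).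
Local Notation C := (tC L). Local Notation c := (tc L).
Local Notation D := (tD L). Local Notation d := (td L).
Local Notation w := (om L).
Local Notation q := (q L).
Local Notation G := (Gco L).
Local Notation s := (q + q^-1).
Local Notation rho := (((q + q^-1) ^+ 2)^-1).

Definition fam12 (t : T4) : tens R :=
  match t with
  | inl (inl (inl (j, l, m))) => R3 (inr j) (gen_rel L l m)
  | inl (inl (inr (l, m, s'))) => L3 (gen_rel L l m) (inr s')
  | inl (inr (i, m)) => R3 (inl i) (gen_b L m)
  | inr j => L3 (gen_c L) (inr j)
  end.
Definition S12 : pred T4 := predT.

Definition cb1 (F : 'I_3 -> 'I_3 -> 'I_3 -> R[i]) (u : seq letter) :=
  \sum_l \sum_m \sum_n F l m n * fam12 (inl (inl (inl (l, m, n)))) u.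
Definition cb2 (F : 'I_3 -> 'I_3 -> 'I_3 -> R[i]) (u : seq letter) :=
  \sum_l \sum_m \sum_n F l m n * fam12 (inl (inl (inr (l, m, n)))) u.
Definition cb3 (F : 'I_3 -> 'I_3 -> R[i]) (u : seq letter) :=
  \sum_k \sum_j F k j * fam12 (inl (inr (k, j))) u.
Definition cb4 (F : 'I_3 -> R[i]) (u : seq letter) :=
  \sum_i F i * fam12 (inr i) u.

Lemma span12_1 F : spanP S12 fam12 (cb1 F).
Proof.
apply: span_ext (span_sum (fun l => span_sum (fun m => span_sum (fun n =>
  spanZ (F l m n) (@span_fam _ _ S12 fam12 (inl (inl (inl (l, m, n)))) isT))))) _.
by [].
Qed.
Lemma span12_2 F : spanP S12 fam12 (cb2 F).
Proof.
apply: span_ext (span_sum (fun l => span_sum (fun m => span_sum (fun n =>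
  spanZ (F l m n) (@span_fam _ _ S12 fam12 (inl (inl (inr (l, m, n)))) isT))))) _.
by [].
Qed.
Lemma span12_3 F : spanP S12 fam12 (cb3 F).
Proof.
apply: span_ext (span_sum (fun k => span_sum (fun j =>
  spanZ (F k j) (@span_fam _ _ S12 fam12 (inl (inr (k, j))) isT)))) _.
by [].
Qed.
Lemma span12_4 F : spanP S12 fam12 (cb4 F).
Proof.
apply: span_ext (span_sum (fun i =>
  spanZ (F i) (@span_fam _ _ S12 fam12 (inr i) isT))) _.
by [].
Qed.

Lemma sum12 (cf : T4 -> R[i]) u : \sum_t cf t * fam12 t u =
  cb1 (fun l m n => cf (inl (inl (inl (l, m, n))))) u +
  cb2 (fun l m n => cf (inl (inl (inr (l, m, n))))) u +
  cb3 (fun k j => cf (inl (inr (k, j)))) u + cb4 (fun i => cf (inr i)) u.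
Proof. by rewrite sumT4. Qed.

Lemma u1a j l m j' l' m' : fam12 (inl (inl (inl (j', l', m')))) [:: inr j; inr l; inl m]
  = kron j j' * (kron l l' * kron m m').
Proof. by evv. Qed.
Lemma u1b l p s' j' l' m' : fam12 (inl (inl (inl (j', l', m')))) [:: inr l; inl p; inr s']
  = kron l j' * (s * G l' m' p s').
Proof. by evv. Qed.
Lemma u1c p s' t j' l' m' : fam12 (inl (inl (inl (j', l', m')))) [:: inl p; inr s'; inr t] = 0.
Proof. by evv. Qed.
Lemma u2a j l m l' m' s' : fam12 (inl (inl (inr (l', m', s')))) [:: inr j; inr l; inl m] = 0.
Proof. by evv. Qed.
Lemma u2b l p s2 l' m' s' : fam12 (inl (inl (inr (l', m', s')))) [:: inr l; inl p; inr s2]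
  = kron l l' * kron p m' * kron s2 s'.
Proof. by evv. Qed.
Lemma u2c p s2 t l' m' s' : fam12 (inl (inl (inr (l', m', s')))) [:: inl p; inr s2; inr t]
  = s * G l' m' p s2 * kron t s'.
Proof. by evv. Qed.
Lemma u3a j l m i m' : fam12 (inl (inr (i, m'))) [:: inr j; inr l; inl m] = 0.
Proof. by evv. Qed.
Lemma u3b l p s2 i m' : fam12 (inl (inr (i, m'))) [:: inr l; inl p; inr s2] = 0.
Proof. by evv. Qed.
Lemma u3c p s2 t i m' : fam12 (inl (inr (i, m'))) [:: inl p; inr s2; inr t] = kron p i * b m' s2 t.
Proof. by evv. Qed.
Lemma u4a j l m j' : fam12 (inr j') [:: inr j; inr l; inl m] = 0.
Proof. by evv. Qed.
Lemma u4b l p s2 j' : fam12 (inr j') [:: inr l; inl p; inr s2] = 0.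
Proof. by evv. Qed.
Lemma u4c p s2 t j' : fam12 (inr j') [:: inl p; inr s2; inr t] = c p s2 * kron t j'.
Proof. by evv. Qed.

Lemma c1a F j l m : cb1 F [:: inr j; inr l; inl m] = F j l m.
Proof.
transitivity (\sum_j' kron j j' * (\sum_l' kron l l' * (\sum_m' kron m m' * F j' l' m'))).
  rewrite /cb1 !sum3 !u1a; ring.
by rewrite sumKl sumKl sumKl.
Qed.
Lemma c1b F l p s2 : cb1 F [:: inr l; inl p; inr s2] = s * \sum_l' \sum_m' F l l' m' * G l' m' p s2.
Proof.
transitivity (s * \sum_j' kron l j' * (\sum_l' \sum_m' F j' l' m' * G l' m' p s2)).
  rewrite /cb1 !sum3 !u1b; ring.
by rewrite sumKl.
Qed.
Lemma c1c F p s2 t : cb1 F [:: inl p; inr s2; inr t] = 0.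
Proof. by apply: sum0 => ?; apply: sum0 => ?; apply: sum0 => ?; rewrite u1c mulr0. Qed.
Lemma c2a F j l m : cb2 F [:: inr j; inr l; inl m] = 0.
Proof. by apply: sum0 => ?; apply: sum0 => ?; apply: sum0 => ?; rewrite u2a mulr0. Qed.
Lemma c2b F l p s2 : cb2 F [:: inr l; inl p; inr s2] = F l p s2.
Proof.
transitivity (\sum_l' kron l l' * (\sum_m' kron p m' * (\sum_s' kron s2 s' * F l' m' s'))).
  rewrite /cb2 !sum3 !u2b; ring.
by rewrite sumKl sumKl sumKl.
Qed.
Lemma c2c F p s2 t : cb2 F [:: inl p; inr s2; inr t] = s * \sum_l' \sum_m' F l' m' t * G l' m' p s2.
Proof.
transitivity (s * \sum_s' kron t s' * (\sum_l' \sum_m' F l' m' s' * G l' m' p s2)).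
  rewrite /cb2 !sum3 !u2c; ring.
by rewrite sumKl.
Qed.
Lemma c3a F j l m : cb3 F [:: inr j; inr l; inl m] = 0.
Proof. by apply: sum0 => ?; apply: sum0 => ?; rewrite u3a mulr0. Qed.
Lemma c3b F l p s2 : cb3 F [:: inr l; inl p; inr s2] = 0.
Proof. by apply: sum0 => ?; apply: sum0 => ?; rewrite u3b mulr0. Qed.
Lemma c3c F p s2 t : cb3 F [:: inl p; inr s2; inr t] = \sum_m F p m * b m s2 t.
Proof.
transitivity (\sum_i kron p i * (\sum_m F i m * b m s2 t)).
  rewrite /cb3 !sum3 !u3c; ring.
by rewrite sumKl.
Qed.
Lemma c4a F j l m : cb4 F [:: inr j; inr l; inl m] = 0.
Proof. by apply: sum0 => ?; rewrite u4a mulr0. Qed.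
Lemma c4b F l p s2 : cb4 F [:: inr l; inl p; inr s2] = 0.
Proof. by apply: sum0 => ?; rewrite u4b mulr0. Qed.
Lemma c4c F p s2 t : cb4 F [:: inl p; inr s2; inr t] = c p s2 * F t.
Proof.
transitivity (c p s2 * \sum_j kron t j * F j).
  rewrite /cb4 !sum3 !u4c; ring.
by rewrite sumKl.
Qed.

Lemma fam12_I t : t \in S12 -> I_comp L 1%N 2%N (fam12 t).
Proof.
move=> _; case: t => [[[[[j l] m]|[[l m] s']]|[i m]]|j]; split.
- exact: inI_R3 (isg_r L l m).
- exact: (homog_R3 (lt := inr j) (homog_r (L:=L) (l:=l) (m:=m))).
- exact: inI_L3 (isg_r L l m).
- exact: (homog_L3 (lt := inr s') (homog_r (L:=L) (l:=l) (m:=m))).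
- exact: inI_R3 (isg_b L m).
- exact: (homog_R3 (lt := inl i) (homog_b (L:=L) (k:=m))).
- exact: inI_L3 (isg_c L).
- exact: (homog_L3 (lt := inr j) (homog_c (L:=L))).
Qed.

Lemma ind12 (cf : T4 -> R[i]) : (forall u, \sum_(t in S12) cf t * fam12 t u = 0) ->
  forall t, t \in S12 -> cf t = 0.
Proof.
move=> Hcf t0 _.
have H' : forall u, cb1 (fun l m n => cf (inl (inl (inl (l, m, n))))) u +
  cb2 (fun l m n => cf (inl (inl (inr (l, m, n))))) u +
  cb3 (fun k j => cf (inl (inr (k, j)))) u + cb4 (fun i => cf (inr i)) u = 0.
  by move=> u; rewrite -sum12 -[RHS](Hcf u); apply: eq_bigl.
have H1 : forall j l m, cf (inl (inl (inl (j, l, m)))) = 0.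
  by move=> j l m; have := H' [:: inr j; inr l; inl m]; rewrite c1a c2a c3a c4a !addr0.
have H2 : forall l p s2, cf (inl (inl (inr (l, p, s2)))) = 0.
  move=> l p s2; have := H' [:: inr l; inl p; inr s2]; rewrite c1b c2b c3b c4b !addr0.
  have Z : \sum_l' \sum_m' cf (inl (inl (inl (l, l', m')))) * G l' m' p s2 = 0.
    by apply: sum0 => ?; apply: sum0 => ?; rewrite H1 mul0r.
  by rewrite Z mulr0 add0r.
have H34 : (forall t, cf (inr t) = 0) /\ (forall p m, cf (inl (inr (p, m))) = 0).
  apply: (@F2 R L) => p s2 t.
  have Z : \sum_l' \sum_m' cf (inl (inl (inr (l', m', t)))) * G l' m' p s2 = 0.
    by apply: sum0 => ?; apply: sum0 => ?; rewrite H2 mul0r.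
  rewrite -[RHS](H' [:: inl p; inr s2; inr t]) c1c c2c c3c c4c Z; ring.
case: H34 => H4 H3.
by case: t0 => [[[[[l m] n]|[[i l] m]]|[k j]]|i].
Qed.

Lemma s2rho' : s ^+ 2 * rho = 1.
Proof. by rewrite divff // expf_neq0 // s_neq0. Qed.

Lemma deg12 (P : seq letter -> Prop) :
  (forall j l m, P [:: inr j; inr l; inl m]) ->
  (forall l p s2, P [:: inr l; inl p; inr s2]) ->
  (forall p s2 t, P [:: inl p; inr s2; inr t]) ->
  forall u, count isV u = 1%N -> count isW u = 2%N -> P u.
Proof.
move=> H1 H2 H3 u e1 e2; have [x [y [z Eu]]] := word3 (erefl : (1 + 2 = 3)%N) e1 e2.
by move: e1 e2; rewrite Eu; case: x y z {Eu} => [x|x] [y|y] [z|z] //= e1 e2.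
Qed.

Lemma extra12a j : spanP S12 fam12 (res 1%N 2%N (R3 (inr j) (gen_c L))).
Proof.
apply: (span_res (spanB (span12_2 (fun l m s' => kron l j * c m s')) (spanZ s (span12_3 (fun i m => a j i m))))).
  by move=> t /fam12_I [].
apply: deg12.
- by move=> j' l m; rewrite c2a c3a; evv; rewrite subrr.
- move=> l p s2; rewrite c2b c3b; evv; rewrite /kron; ring.
- move=> p s2 t; rewrite c2c c3c; evv.
  have X : \sum_l' \sum_m' kron l' j * c m' t * G l' m' p s2 = \sum_m' c m' t * G j m' p s2.
    rewrite -(sumKl' (fun l' => \sum_m' c m' t * G l' m' p s2) j).
    apply: eq_bigr => l' _; rewrite mulr_sumr; apply: eq_bigr => m' _; ring.
  rewrite X I3; ring.
Qed.

Lemma extra12b m n : spanP S12 fam12 (res 1%N 2%N (L3 (gen_b L m) (inl n))).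
Proof.
apply: (span_res (spanD (spanD (spanB (span12_1 (fun j l m' => b m j l * kron m' n))
   (spanZ s (span12_2 (fun k p s' => \sum_l b m k l * G l n p s'))))
   (spanZ (w ^+ 2) (span12_3 (fun i m' => kron i m * kron m' n)))) (spanZ w (span12_4 (fun k => A m n k))))).
  by move=> t /fam12_I [].
apply: deg12.
- by move=> j l m'; rewrite c1a c2a c3a c4a; evv; rewrite /kron; ring.
- move=> l p s2; rewrite c1b c2b c3b c4b; evv.
  have X : \sum_l' \sum_m' b m l l' * kron m' n * G l' m' p s2 = \sum_l' b m l l' * G l' n p s2.
    apply: eq_bigr => l' _; rewrite -(sumKl' (fun m' => b m l l' * G l' m' p s2) n).
    apply: eq_bigr => m' _; ring.
  rewrite X; ring.
- move=> p s2 t; rewrite c1c c2c c3c c4c; evv.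
  have X : \sum_l' \sum_m' (\sum_l b m l' l * G l n m' t) * G l' m' p s2
         = \sum_k \sum_l \sum_p' b m k l * G k p' p s2 * G l n p' t.
    rewrite !sum3; ring.
  have Y : \sum_m' kron p m * kron m' n * b m' s2 t = kron p m * b n s2 t.
    rewrite -(sumKl' (fun m' => kron p m * b m' s2 t) n); apply: eq_bigr => m' _; ring.
  rewrite X I4 Y.
  have E := s2rho'.
  symmetry; transitivity (- (s ^+ 2 * rho) * (w ^+ 2 * kron p m * b n s2 t + w * A m n t * c p s2)
     + (w ^+ 2 * (kron p m * b n s2 t) + w * (c p s2 * A m n t))); first ring.
  rewrite E; ring.
Qed.

Lemma span12 g : is_gen L g -> forall lt,
  spanP S12 fam12 (res 1%N 2%N (L3 g lt)) /\ spanP S12 fam12 (res 1%N 2%N (R3 lt g)).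
Proof.
case=> [[k ->]|[[m ->]|[->|[l [m ->]]]]] [i|j]; split; try z0.
- exact: extra12b.
- apply: (resid_R3 (homog_b (L:=L) (k:=m))) => //. exact: (@span_fam _ _ S12 fam12 (inl (inr (i, m)))).
- apply: (resid_L3 (homog_c (L:=L))) => //. exact: (@span_fam _ _ S12 fam12 (inr j)).
- exact: extra12a.
- apply: (resid_L3 (homog_r (L:=L) (l:=l) (m:=m))) => //. exact: (@span_fam _ _ S12 fam12 (inl (inl (inr (l, m, j))))).
- apply: (resid_R3 (homog_r (L:=L) (l:=l) (m:=m))) => //. exact: (@span_fam _ _ S12 fam12 (inl (inl (inl (j, l, m))))).
Qed.

Lemma dim12 : has_dim (I_comp L 1%N 2%N) 66%N.
Proof.
apply: (has_dim_gen (S := S12) (fam := fam12)) => //.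
- exact: cardT4.
- exact: sz2_gen.
- exact: fam12_I.
- exact: ind12.
- exact: span12.
Qed.

End D12.

Local Close Scope ring_scope.

Theorem lemma5p2 (R : realType) (L : BQD R) :
  has_dim (I_comp L 3 0) 17 /\ has_dim (I_comp L 0 3) 17 /\
  has_dim (I_comp L 2 1) 66 /\ has_dim (I_comp L 1 2) 66.
Proof.
split; first exact: dim30.
split; first exact: dim03.
split; first exact: dim21.
exact: dim12.
Qed.
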